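(* Let $p$ be an odd prime and $\ell\geq 1$ an integer. Then for every $\tau\in\mathbb{H}$, $$\prod_{j=0}^{\ell}\ \prod_{\substack{0\leq v<p^j\\ \gcd(p^{\ell-j},v,p^j)=1}}\theta_3\Big(\frac{p^{\ell-j}\tau+2v}{p^j}\Big)=\theta_3^{\psi(p^\ell)}(\tau).$$
   Context: $\mathbb{H}=\{\tau\in\mathbb{C}:\Im(\tau)>0\}$. For $\tau\in\mathbb{H}$, $\theta_3(\tau)=1+2\sum_{\nu=1}^{\infty}e^{\pi i\nu^2\tau}$. For a positive integer $n$, $\psi(n)=n\prod_{p\mid n}(1+1/p)$, the product over primes dividing $n$; in particular $\psi(p^\ell)=p^\ell+p^{\ell-1}$. *)

(* Defs.v *)
From Stdlib Require Import Reals Lra List Arith ZArith Znumtheory ClassicalEpsilon.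
Open Scope R_scope.

Definition Cplx : Type := (R * R)%type.
Definition Cre (z : Cplx) : R := fst z.
Definition Cim (z : Cplx) : R := snd z.
Definition C0 : Cplx := (0, 0).
Definition C1 : Cplx := (1, 0).
Definition Cadd (z w : Cplx) : Cplx := (fst z + fst w, snd z + snd w).
Definition Cmul (z w : Cplx) : Cplx :=
  (fst z * fst w - snd z * snd w, fst z * snd w + snd z * fst w).
Definition Cscal (r : R) (z : Cplx) : Cplx := (r * fst z, r * snd z).
Fixpoint Cpow (z : Cplx) (n : nat) : Cplx :=
  match n with O => C1 | S k => Cmul z (Cpow z k) end.
Definition Cprod_list (l : list Cplx) : Cplx := fold_right Cmul C1 l.

Definition Cexp (z : Cplx) : Cplx := (exp (fst z) * cos (snd z), exp (fst z) * sin (snd z)).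

Definition Cmul_i (z : Cplx) : Cplx := (- snd z, fst z).

(* Value of a real series (sum_{n>=0} u n), chosen by classical choice;
   it is the genuine limit whenever the series converges. *)
Definition series_val (u : nat -> R) : R :=
  epsilon (inhabits 0) (fun l => infinite_sum u l).

(* theta_3(tau) = 1 + 2 sum_{nu>=1} exp(pi i nu^2 tau). *)
Definition theta_term (tau : Cplx) (nu : nat) : Cplx :=
  Cexp (Cscal (PI * INR (nu * nu)) (Cmul_i tau)).

Definition theta3 (tau : Cplx) : Cplx :=
  Cadd C1 (Cscal 2 (series_val (fun n => fst (theta_term tau (S n))),
                    series_val (fun n => snd (theta_term tau (S n))))).

Definition theta_arg (p l j v : nat) (tau : Cplx) : Cplx :=
  Cscal (/ INR (p ^ j))
        (Cadd (Cscal (INR (p ^ (l - j))) tau) (INR (2 * v), 0)).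

Definition inner_prod (p l j : nat) (tau : Cplx) : Cplx :=
  Cprod_list
    (map (fun v => theta3 (theta_arg p l j v tau))
       (filter (fun v => Nat.eqb (Nat.gcd (Nat.gcd (p ^ (l - j)) v) (p ^ j)) 1)
          (seq 0 (p ^ j)))).

Definition outer_prod (p l : nat) (tau : Cplx) : Cplx :=
  Cprod_list (map (fun j => inner_prod p l j tau) (seq 0 (S l))).

(* Dedekind psi at a prime power: psi(p^l) = p^l + p^(l-1). *)
Definition psi_pp (p l : nat) : nat := (p ^ l + p ^ (l - 1))%nat.

(* Main.v *)
From Pilot Require Import Defs.
From Stdlib Require Import Reals Lra List Arith ZArith Znumtheory Field Lia ClassicalEpsilon FunctionalExtensionality.
Open Scope R_scope.
Notation C1 := Pilot.Defs.C1.
Notation C0 := Pilot.Defs.C0.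

Definition Copp (z : Cplx) : Cplx := (- fst z, - snd z).
Definition Csub (z w : Cplx) : Cplx := Cadd z (Copp w).
Definition Cinv (z : Cplx) : Cplx :=
  (fst z / (fst z * fst z + snd z * snd z), - snd z / (fst z * fst z + snd z * snd z)).
Definition Cdiv (z w : Cplx) : Cplx := Cmul z (Cinv w).

Lemma Cring_th : ring_theory C0 C1 Cadd Cmul Csub Copp (@eq Cplx).
Proof.
  constructor; intros; unfold Cadd, Cmul, Csub, Copp, C0, C1;
  repeat match goal with z : Cplx |- _ => destruct z end; simpl; try reflexivity; f_equal; ring.
Qed.

Lemma C1_neq_C0 : C1 <> C0.
Proof. unfold C1, C0; intro H; injection H; lra. Qed.

Lemma Cfield_th : field_theory C0 C1 Cadd Cmul Csub Copp Cdiv Cinv (@eq Cplx).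
Proof.
  constructor.
  - exact Cring_th.
  - exact C1_neq_C0.
  - reflexivity.
  - intros [x y] H. unfold Cinv, Cmul, C1; simpl.
    assert (Hn : x * x + y * y <> 0).
    { intro E. apply H. unfold C0.
      assert (x = 0) by nra. assert (y = 0) by nra. subst; reflexivity. }
    f_equal; field; exact Hn.
Qed.

Add Field Cfield : Cfield_th.

Lemma test (a b c : Cplx) : b <> C0 -> Cmul (Cdiv a b) b = a.
Proof. intros. field. auto. Qed.

Ltac sqpos := apply Rplus_le_le_0_compat; apply Rle_0_sqr.

Lemma Cpow_add z m n : Cpow z (m + n) = Cmul (Cpow z m) (Cpow z n).
Proof. induction m; simpl. field. rewrite IHm. field. Qed.

Lemma Cpow_mul z m n : Cpow z (m * n) = Cpow (Cpow z m) n.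
Proof.
  induction n; simpl. rewrite Nat.mul_0_r. reflexivity.
  rewrite Nat.mul_succ_r, Cpow_add, IHn. field.
Qed.

Lemma Cpow_Cmul a b n : Cpow (Cmul a b) n = Cmul (Cpow a n) (Cpow b n).
Proof. induction n; simpl. field. rewrite IHn. field. Qed.

Lemma Cpow_1 z : Cpow z 1 = z.
Proof. simpl. field. Qed.

Lemma Cpow_C1 n : Cpow C1 n = C1.
Proof. induction n; simpl. reflexivity. rewrite IHn. field. Qed.

Lemma Cprod_app l1 l2 : Cprod_list (l1 ++ l2) = Cmul (Cprod_list l1) (Cprod_list l2).
Proof. induction l1; simpl. field. rewrite IHl1. field. Qed.

Lemma Cprod_map_mul {A} (f g : A -> Cplx) l :
  Cprod_list (map (fun x => Cmul (f x) (g x)) l) =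
  Cmul (Cprod_list (map f l)) (Cprod_list (map g l)).
Proof. induction l; simpl. field. rewrite IHl. field. Qed.

Lemma Cprod_map_pow {A} (f : A -> Cplx) l n :
  Cprod_list (map (fun x => Cpow (f x) n) l) = Cpow (Cprod_list (map f l)) n.
Proof. induction l; simpl. rewrite Cpow_C1; reflexivity. rewrite IHl, Cpow_Cmul. reflexivity. Qed.

Lemma Cprod_map_ext {A} (f g : A -> Cplx) l :
  (forall x, In x l -> f x = g x) -> Cprod_list (map f l) = Cprod_list (map g l).
Proof. induction l; simpl; intros H. reflexivity. rewrite H, IHl; auto. Qed.

Lemma Cprod_const {A} (c : Cplx) (l : list A) :
  Cprod_list (map (fun _ => c) l) = Cpow c (length l).
Proof. induction l; simpl. reflexivity. rewrite IHl. reflexivity. Qed.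

Lemma Cprod_swap {A B} (f : A -> B -> Cplx) la lb :
  Cprod_list (map (fun a => Cprod_list (map (fun b => f a b) lb)) la) =
  Cprod_list (map (fun b => Cprod_list (map (fun a => f a b) la)) lb).
Proof.
  induction la; simpl.
  - induction lb; simpl. reflexivity. rewrite <- IHlb. field.
  - rewrite IHla. rewrite <- Cprod_map_mul. reflexivity.
Qed.

Lemma Cexp_add a b : Cexp (Cadd a b) = Cmul (Cexp a) (Cexp b).
Proof.
  destruct a as [x y], b as [u v]; unfold Cexp, Cadd, Cmul; simpl.
  rewrite exp_plus, cos_plus, sin_plus. f_equal; ring.
Qed.

Lemma Cexp_0 : Cexp C0 = C1.
Proof. unfold Cexp, C0, C1; simpl. rewrite exp_0, cos_0, sin_0. f_equal; ring. Qed.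

Lemma Cexp_nat z n : Cexp (Cscal (INR n) z) = Cpow (Cexp z) n.
Proof.
  induction n.
  - simpl. rewrite <- Cexp_0. unfold Cscal, C0. f_equal; simpl; f_equal; ring.
  - simpl Cpow. rewrite <- IHn, <- Cexp_add. f_equal.
    unfold Cscal, Cadd; rewrite S_INR; simpl; f_equal; ring.
Qed.

Lemma Cexp_neq0 z : Cexp z <> C0.
Proof.
  destruct z as [x y]; unfold Cexp, C0; simpl; intro H; injection H; intros H1 H2.
  pose proof (exp_pos x). pose proof (sin2_cos2 y). unfold Rsqr in *.
  apply Rmult_integral in H1; apply Rmult_integral in H2. nra.
Qed.

Definition Cnorm (z : Cplx) : R := sqrt (fst z * fst z + snd z * snd z).

Lemma Cnorm_ge0 z : 0 <= Cnorm z.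
Proof. apply sqrt_pos. Qed.

Lemma Cnorm_mul a b : Cnorm (Cmul a b) = Cnorm a * Cnorm b.
Proof.
  destruct a as [x y], b as [u v]; unfold Cnorm, Cmul; simpl.
  rewrite <- sqrt_mult_alt by sqpos. f_equal; ring.
Qed.

Lemma Cnorm_add a b : Cnorm (Cadd a b) <= Cnorm a + Cnorm b.
Proof.
  destruct a as [x y], b as [u v]; unfold Cnorm, Cadd; simpl.
  set (s1 := sqrt (x*x+y*y)). set (s2 := sqrt (u*u+v*v)).
  assert (H1 : s1 * s1 = x*x+y*y) by (apply sqrt_sqrt; sqpos).
  assert (H2 : s2 * s2 = u*u+v*v) by (apply sqrt_sqrt; sqpos).
  assert (P1 : 0 <= s1) by apply sqrt_pos. assert (P2 : 0 <= s2) by apply sqrt_pos.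
  assert (CS : x*u + y*v <= s1 * s2).
  { assert (HH: (x*u+y*v)*(x*u+y*v) <= (s1*s2)*(s1*s2)).
    { replace ((s1*s2)*(s1*s2)) with ((s1*s1)*(s2*s2)) by ring. rewrite H1, H2. pose proof (Rle_0_sqr (x*v-y*u)) as Hq; unfold Rsqr in Hq; nra. }
    apply Rsqr_incr_0_var; unfold Rsqr; nra. }
  apply Rsqr_incr_0_var. 2: lra.
  unfold Rsqr. rewrite sqrt_sqrt by sqpos. nra.
Qed.

Lemma Cnorm_fst z : Rabs (fst z) <= Cnorm z.
Proof.
  destruct z as [x y]; unfold Cnorm; simpl.
  rewrite <- sqrt_Rsqr_abs. apply sqrt_le_1_alt. unfold Rsqr; nra.
Qed.

Lemma Cnorm_snd z : Rabs (snd z) <= Cnorm z.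
Proof.
  destruct z as [x y]; unfold Cnorm; simpl.
  rewrite <- sqrt_Rsqr_abs. apply sqrt_le_1_alt. unfold Rsqr; nra.
Qed.

Lemma Cnorm_C1 : Cnorm C1 = 1.
Proof. unfold Cnorm, C1; simpl. replace (1*1+0*0) with 1 by ring. apply sqrt_1. Qed.

Lemma Cnorm_opp z : Cnorm (Copp z) = Cnorm z.
Proof. destruct z; unfold Cnorm, Copp; simpl; f_equal; ring. Qed.

Lemma Cnorm_sub a b : Cnorm (Csub a b) <= Cnorm a + Cnorm b.
Proof. unfold Csub. rewrite <- (Cnorm_opp b). apply Cnorm_add. Qed.

Lemma Cnorm_pow z n : Cnorm (Cpow z n) = Cnorm z ^ n.
Proof. induction n; simpl. apply Cnorm_C1. rewrite Cnorm_mul, IHn. reflexivity. Qed.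

Lemma Cnorm_exp z : Cnorm (Cexp z) = exp (fst z).
Proof.
  destruct z as [x y]; unfold Cnorm, Cexp; simpl.
  replace (exp x * cos y * (exp x * cos y) + exp x * sin y * (exp x * sin y))
    with (exp x * exp x) by (pose proof (sin2_cos2 y); unfold Rsqr in *; nra).
  apply sqrt_square. left; apply exp_pos.
Qed.

Lemma Cnorm_eq0 z : Cnorm z = 0 -> z = C0.
Proof.
  destruct z as [x y]; unfold Cnorm, C0; simpl; intro H.
  apply sqrt_eq_0 in H; [|sqpos]. assert (x = 0) by nra. assert (y = 0) by nra. subst; reflexivity.
Qed.

Lemma Cnorm_sub_ge a b : Cnorm a - Cnorm b <= Cnorm (Csub a b).
Proof.
  assert (a = Cadd (Csub a b) b) by (unfold Csub, Cadd, Copp; destruct a, b; simpl; f_equal; ring).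
  pose proof (Cnorm_add (Csub a b) b). rewrite <- H in H0. lra.
Qed.

Definition Ccv (u : nat -> Cplx) (l : Cplx) : Prop :=
  Un_cv (fun n => fst (u n)) (fst l) /\ Un_cv (fun n => snd (u n)) (snd l).

Lemma Ccv_const c : Ccv (fun _ => c) c.
Proof. split; intros e He; exists 0%nat; intros; unfold R_dist; rewrite Rminus_diag, Rabs_R0; lra. Qed.

Lemma Ccv_add u v a b : Ccv u a -> Ccv v b -> Ccv (fun n => Cadd (u n) (v n)) (Cadd a b).
Proof. intros [H1 H2] [H3 H4]; split; simpl; apply CV_plus; auto. Qed.

Lemma Ccv_mul u v a b : Ccv u a -> Ccv v b -> Ccv (fun n => Cmul (u n) (v n)) (Cmul a b).
Proof.
  intros [H1 H2] [H3 H4]; split; simpl.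
  - apply CV_minus; apply CV_mult; auto.
  - apply CV_plus; apply CV_mult; auto.
Qed.

Lemma Ccv_scal r u a : Ccv u a -> Ccv (fun n => Cscal r (u n)) (Cscal r a).
Proof.
  intros [H1 H2]; split; simpl; apply CV_mult; auto; intros e He; exists 0%nat; intros;
  unfold R_dist; rewrite Rminus_diag, Rabs_R0; lra.
Qed.

Lemma Ccv_pow u a k : Ccv u a -> Ccv (fun n => Cpow (u n) k) (Cpow a k).
Proof. intros H; induction k; simpl. apply Ccv_const. apply Ccv_mul; auto. Qed.

Lemma Ccv_prod {A} (f : nat -> A -> Cplx) (g : A -> Cplx) l :
  (forall a, In a l -> Ccv (fun n => f n a) (g a)) ->
  Ccv (fun n => Cprod_list (map (f n) l)) (Cprod_list (map g l)).
Proof.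
  induction l; simpl; intros H. apply Ccv_const.
  apply Ccv_mul; auto.
Qed.

Lemma Ccv_unique u a b : Ccv u a -> Ccv u b -> a = b.
Proof.
  intros [H1 H2] [H3 H4]. destruct a, b; simpl in *.
  f_equal; eapply UL_sequence; eauto.
Qed.

Lemma Ccv_ext u v a : (forall n, u n = v n) -> Ccv u a -> Ccv v a.
Proof.
  intros E [H1 H2]; split; intros e He; [destruct (H1 e He) as [N HN]|destruct (H2 e He) as [N HN]];
  exists N; intros n Hn; rewrite <- E; auto.
Qed.

Lemma Ccv_subseq u a (phi : nat -> nat) : (forall n, (n <= phi n)%nat) -> Ccv u a -> Ccv (fun n => u (phi n)) a.
Proof.
  intros Hphi [H1 H2]; split; intros e He; [destruct (H1 e He) as [N HN]|destruct (H2 e He) as [N HN]];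
  exists N; intros n Hn; apply HN; specialize (Hphi n); lia.
Qed.

Lemma Cnorm_le_abs z : Cnorm z <= Rabs (fst z) + Rabs (snd z).
Proof.
  destruct z as [x y]. replace (x, y) with (Cadd (x, 0) (0, y)) by (unfold Cadd; simpl; f_equal; ring).
  eapply Rle_trans. apply Cnorm_add. unfold Cnorm; simpl.
  replace (x*x+0*0) with (Rsqr x) by (unfold Rsqr; ring).
  replace (0*0+y*y) with (Rsqr y) by (unfold Rsqr; ring).
  rewrite !sqrt_Rsqr_abs. unfold Cadd; simpl. rewrite !Rplus_0_r, !Rplus_0_l. lra.
Qed.

Lemma Cnorm_fst_sub z w : Rabs (fst z - fst w) <= Cnorm (Csub z w).
Proof. pose proof (Cnorm_fst (Csub z w)). destruct z, w; exact H. Qed.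
Lemma Cnorm_snd_sub z w : Rabs (snd z - snd w) <= Cnorm (Csub z w).
Proof. pose proof (Cnorm_snd (Csub z w)). destruct z, w; exact H. Qed.
Lemma Ccv_of_norm u a :
  (forall e, 0 < e -> exists N, forall n, (N <= n)%nat -> Cnorm (Csub (u n) a) < e) -> Ccv u a.
Proof.
  intros H; split; intros e He; destruct (H e He) as [N HN]; exists N; intros n Hn;
  specialize (HN n Hn); unfold R_dist.
  - pose proof (Cnorm_fst_sub (u n) a). lra.
  - pose proof (Cnorm_snd_sub (u n) a). lra.
Qed.

Lemma Ccv_norm u a : Ccv u a ->
  forall e, 0 < e -> exists N, forall n, (N <= n)%nat -> Cnorm (Csub (u n) a) < e.
Proof.
  intros [H1 H2] e He. destruct (H1 (e/2)) as [N1 HN1]; [lra|]. destruct (H2 (e/2)) as [N2 HN2]; [lra|].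
  exists (N1 + N2)%nat; intros n Hn. eapply Rle_lt_trans. apply Cnorm_le_abs.
  specialize (HN1 n ltac:(lia)); specialize (HN2 n ltac:(lia)); unfold R_dist in *.
  assert (Csub (u n) a = (fst (u n) - fst a, snd (u n) - snd a)) as ->
   by (destruct (u n), a; reflexivity). simpl. lra.
Qed.

Lemma Ccv_close u v a : Ccv u a ->
  (forall e, 0 < e -> exists N, forall n, (N <= n)%nat -> Cnorm (Csub (v n) (u n)) < e) ->
  Ccv v a.
Proof.
  intros Hu Hd. apply Ccv_of_norm. intros e He.
  destruct (Ccv_norm u a Hu (e/2)) as [N1 H1]; [lra|]. destruct (Hd (e/2)) as [N2 H2]; [lra|].
  exists (N1+N2)%nat; intros n Hn.
  replace (Csub (v n) a) with (Cadd (Csub (v n) (u n)) (Csub (u n) a)) by field.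
  eapply Rle_lt_trans. apply Cnorm_add. specialize (H1 n ltac:(lia)); specialize (H2 n ltac:(lia)). lra.
Qed.

Lemma Ccv_norm_lower u a c : Ccv u a -> (forall n, c <= Cnorm (u n)) -> c <= Cnorm a.
Proof.
  intros Hu Hc. destruct (Rle_dec c (Cnorm a)) as [h|h]; auto. exfalso.
  destruct (Ccv_norm u a Hu (c - Cnorm a)) as [N HN]; [lra|].
  specialize (HN N (le_n _)). pose proof (Cnorm_sub_ge (u N) a). specialize (Hc N). lra.
Qed.

Definition qx (tau : Cplx) : Cplx := Cexp (Cscal PI (Cmul_i tau)).

Lemma theta_term_pow tau n : theta_term tau n = Cpow (qx tau) (n * n).
Proof.
  unfold theta_term, qx. rewrite <- Cexp_nat. f_equal.
  unfold Cscal; simpl; f_equal; ring.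
Qed.

Lemma Cnorm_qx tau : Cnorm (qx tau) = exp (- (PI * Cim tau)).
Proof. unfold qx. rewrite Cnorm_exp. unfold Cscal, Cmul_i, Cim; simpl. f_equal; ring. Qed.

Lemma Cnorm_qx_lt1 tau : 0 < Cim tau -> Cnorm (qx tau) < 1.
Proof.
  intros H. rewrite Cnorm_qx. rewrite <- exp_0. apply exp_increasing.
  pose proof PI_RGT_0. nra.
Qed.

Fixpoint Csum_list (l : list Cplx) : Cplx := match l with nil => C0 | x :: r => Cadd x (Csum_list r) end.

Lemma Csum_app l1 l2 : Csum_list (l1 ++ l2) = Cadd (Csum_list l1) (Csum_list l2).
Proof. induction l1; simpl. field. rewrite IHl1. field. Qed.

Lemma Csum_fst f N : fst (Csum_list (map f (seq 0 (S N)))) = sum_f_R0 (fun n => fst (f n)) N.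
Proof.
  induction N. simpl. ring.
  rewrite seq_S, map_app, Csum_app. simpl sum_f_R0. rewrite <- IHN. simpl. ring.
Qed.

Lemma Csum_snd f N : snd (Csum_list (map f (seq 0 (S N)))) = sum_f_R0 (fun n => snd (f n)) N.
Proof.
  induction N. simpl. ring.
  rewrite seq_S, map_app, Csum_app. simpl sum_f_R0. rewrite <- IHN. simpl. ring.
Qed.

Lemma Cnorm_Csum l : Cnorm (Csum_list l) <= fold_right Rplus 0 (map Cnorm l).
Proof.
  induction l; simpl. unfold Cnorm, C0; simpl. replace (0*0+0*0) with 0 by ring. rewrite sqrt_0. lra.
  eapply Rle_trans. apply Cnorm_add. lra.
Qed.

Lemma Csum_cv (f : nat -> Cplx) a b :
  Un_cv (sum_f_R0 (fun n => fst (f n))) a -> Un_cv (sum_f_R0 (fun n => snd (f n))) b ->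
  Ccv (fun N => Csum_list (map f (seq 0 (S N)))) (a, b).
Proof.
  intros H1 H2; split.
  - eapply Un_cv_ext; [|exact H1]. intros n; cbv beta. symmetry; apply Csum_fst.
  - eapply Un_cv_ext; [|exact H2]. intros n; cbv beta. symmetry; apply Csum_snd.
Qed.

Definition SN (x : Cplx) (N : nat) : Cplx :=
  Cadd C1 (Cscal 2 (Csum_list (map (fun n => Cpow x (S n * S n)) (seq 0 (S N))))).

Lemma series_from_bound (u : nat -> R) (r : R) :
  0 <= r < 1 -> (forall n, Rabs (u n) <= r ^ n) -> infinite_sum u (series_val u).
Proof.
  intros Hr Hu. unfold series_val. apply epsilon_spec.
  assert (G : {l | Un_cv (fun N => sum_f_R0 (fun n => r ^ n) N) l}).
  { exists (/ (1 - r)). pose proof (GP_infinite r) as HG. 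
    assert (Rabs r < 1) by (rewrite Rabs_pos_eq; lra).
    specialize (HG H). intros e He. destruct (HG e He) as [N HN]. exists N. intros n Hn.
    specialize (HN n Hn). unfold R_dist in *.
    replace (sum_f_R0 (fun n0 => r ^ n0) n) with (sum_f_R0 (fun n0 => 1 * r ^ n0) n); auto.
    apply sum_eq; intros; ring. }
  destruct (Rseries_CV_comp (fun n => Rabs (u n)) (fun n => r ^ n)) as [l Hl].
  { intros n; split. apply Rabs_pos. auto. }
  { exact G. }
  destruct (cv_cauchy_2 u) as [l' Hl'].
  { apply cauchy_abs. apply cv_cauchy_1. exists l; exact Hl. }
  exists l'. exact Hl'.
Qed.

Lemma pow_le1' r n : 0 <= r <= 1 -> r ^ n <= 1.
Proof. intros H; induction n; simpl. lra. assert (0 <= r ^ n) by (apply pow_le; lra). nra. Qed.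

Lemma pow_le_dec r a b : 0 <= r <= 1 -> (b <= a)%nat -> r ^ a <= r ^ b.
Proof.
  intros H Hab. replace a with (b + (a - b))%nat by lia. rewrite pow_add.
  assert (0 <= r ^ b) by (apply pow_le; lra).
  assert (r ^ (a - b) <= 1) by (apply pow_le1'; lra). nra.
Qed.

Lemma pow_sq_le r n : 0 <= r <= 1 -> r ^ (S n * S n) <= r ^ n.
Proof. intros H. apply pow_le_dec; [lra|nia]. Qed.

Lemma theta3_lim tau : 0 < Cim tau -> Ccv (SN (qx tau)) (theta3 tau).
Proof.
  intros H. set (x := qx tau). set (r := Cnorm x).
  assert (Hr : 0 <= r < 1) by (split; [apply Cnorm_ge0| apply Cnorm_qx_lt1; auto]).
  assert (B1 : forall n, Rabs (fst (theta_term tau (S n))) <= r ^ n).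
  { intros n. eapply Rle_trans. apply Cnorm_fst. rewrite theta_term_pow, Cnorm_pow. apply pow_sq_le. lra. }
  assert (B2 : forall n, Rabs (snd (theta_term tau (S n))) <= r ^ n).
  { intros n. eapply Rle_trans. apply Cnorm_snd. rewrite theta_term_pow, Cnorm_pow. apply pow_sq_le. lra. }
  pose proof (series_from_bound _ r Hr B1) as S1.
  pose proof (series_from_bound _ r Hr B2) as S2.
  unfold theta3. unfold SN.
  apply Ccv_add. apply Ccv_const. apply Ccv_scal. apply Csum_cv.
  - intros e He. destruct (S1 e He) as [N HN]. exists N. intros n Hn.
    erewrite sum_eq. apply HN; auto. intros i _. cbv beta. rewrite theta_term_pow. reflexivity.
  - intros e He. destruct (S2 e He) as [N HN]. exists N. intros n Hn.
    erewrite sum_eq. apply HN; auto. intros i _. cbv beta. rewrite theta_term_pow. reflexivity.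
Qed.

Lemma Csum_map_add {A} (f g : A -> Cplx) l :
  Csum_list (map (fun x => Cadd (f x) (g x)) l) = Cadd (Csum_list (map f l)) (Csum_list (map g l)).
Proof. induction l; simpl. field. rewrite IHl. field. Qed.

Lemma Csum_scal {A} c (f : A -> Cplx) l :
  Csum_list (map (fun x => Cmul c (f x)) l) = Cmul c (Csum_list (map f l)).
Proof. induction l; simpl. field. rewrite IHl. field. Qed.

Lemma Csum_ext {A} (f g : A -> Cplx) l :
  (forall x, In x l -> f x = g x) -> Csum_list (map f l) = Csum_list (map g l).
Proof. induction l; simpl; intros H. reflexivity. rewrite H, IHl; auto. Qed.

Lemma seq_first a n : seq a (S n) = a :: map S (seq a n).
Proof. simpl. rewrite seq_shift. reflexivity. Qed.

Lemma Csum_first f n :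
  Csum_list (map f (seq 0 (S n))) = Cadd (f 0%nat) (Csum_list (map (fun m => f (S m)) (seq 0 n))).
Proof. rewrite seq_first. simpl. rewrite map_map. reflexivity. Qed.

Lemma Csum_last f n :
  Csum_list (map f (seq 0 (S n))) = Cadd (Csum_list (map f (seq 0 n))) (f n).
Proof. rewrite seq_S, map_app, Csum_app. simpl. f_equal. field. Qed.

Lemma Cprod_first f n :
  Cprod_list (map f (seq 0 (S n))) = Cmul (f 0%nat) (Cprod_list (map (fun m => f (S m)) (seq 0 n))).
Proof. rewrite seq_first. simpl. rewrite map_map. reflexivity. Qed.

Lemma Cprod_last f a n :
  Cprod_list (map f (seq a (S n))) = Cmul (Cprod_list (map f (seq a n))) (f (a + n)%nat).
Proof. rewrite seq_S, map_app, Cprod_app. simpl. f_equal. field. Qed.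

Lemma Cprod_shift f a n :
  Cprod_list (map f (seq (S a) n)) = Cprod_list (map (fun m => f (S m)) (seq a n)).
Proof. rewrite <- seq_shift, map_map. reflexivity. Qed.

Lemma Csum_shift f a n :
  Csum_list (map f (seq (S a) n)) = Csum_list (map (fun m => f (S m)) (seq a n)).
Proof. rewrite <- seq_shift, map_map. reflexivity. Qed.

(* Gaussian binomial coefficients *)
Fixpoint G (q : Cplx) (n m : nat) : Cplx :=
  match n, m with
  | O, O => C1
  | O, S _ => C0
  | S _, O => C1
  | S n', S m' => Cadd (G q n' m') (Cmul (Cpow q (S m')) (G q n' (S m')))
  end.

Lemma G_zero q n m : (n < m)%nat -> G q n m = C0.
Proof.
  revert m; induction n; intros m H; destruct m; simpl; try lia; auto.
  rewrite IHn by lia. rewrite IHn by lia. field.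
Qed.

Lemma G_n0 q n : G q n 0 = C1.
Proof. destruct n; reflexivity. Qed.

Fixpoint tri (n : nat) : nat := match n with O => O | S k => (tri k + k)%nat end.

Definition Tq (q u w : Cplx) (n : nat) : Cplx :=
  Csum_list (map (fun m => Cmul (Cmul (Cmul (G q n m) (Cpow q (tri m))) (Cpow w m)) (Cpow u (n - m)))
    (seq 0 (S n))).

Lemma qbinom q u n : forall w,
  Cprod_list (map (fun k => Cadd u (Cmul (Cpow q k) w)) (seq 0 n)) = Tq q u w n.
Proof.
  induction n; intros w.
  - unfold Tq; simpl. field.
  - rewrite Cprod_first.
    rewrite (Cprod_map_ext _ (fun k => Cadd u (Cmul (Cpow q k) (Cmul q w)))).
    2:{ intros k _. simpl. f_equal. field. }
    rewrite IHn. unfold Tq.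
    set (h := fun m => Cmul (Cmul (Cmul (G q n m) (Cpow q (tri m))) (Cpow (Cmul q w) m)) (Cpow u (n - m))).
    set (g := fun m => Cmul (Cmul (Cmul (G q (S n) m) (Cpow q (tri m))) (Cpow w m)) (Cpow u (S n - m))).
    rewrite (Csum_first g (S n)).
    rewrite (Csum_ext (fun m => g (S m)) (fun m => Cadd (Cmul w (h m)) (Cmul u (h (S m))))).
    2:{ intros m Hm. apply in_seq in Hm. unfold h, g.
        simpl G. simpl tri. rewrite Cpow_add. rewrite !Cpow_Cmul.
        replace (S n - S m)%nat with (n - m)%nat by lia.
        destruct (Nat.eq_dec m n) as [->|Hne].
        - rewrite (G_zero q n (S n)) by lia. rewrite Nat.sub_diag. simpl. field.
        - replace (n - m)%nat with (S (n - S m)) by lia. simpl. field. }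
    rewrite Csum_map_add, !Csum_scal.
    rewrite (Csum_last (fun m => h (S m))).
    rewrite (Csum_first h n).
    assert (E0 : h 0%nat = Cpow u n) by (unfold h; rewrite G_n0, Nat.sub_0_r; simpl; field).
    assert (E1 : h (S n) = C0) by (unfold h; rewrite (G_zero q n (S n)) by lia; field).
    assert (E2 : g 0%nat = Cpow u (S n)) by (unfold g; rewrite G_n0, Nat.sub_0_r; simpl; field).
    rewrite E0, E1, E2. change (Cpow q 0) with C1. change (Cpow u (S n)) with (Cmul u (Cpow u n)). field.
Qed.

Definition qpoch (q : Cplx) (n : nat) : Cplx :=
  Cprod_list (map (fun k => Csub C1 (Cpow q (S k))) (seq 0 n)).

Lemma qpoch_S q n : qpoch q (S n) = Cmul (qpoch q n) (Csub C1 (Cpow q (S n))).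
Proof. unfold qpoch. rewrite Cprod_last. reflexivity. Qed.

Lemma G_SS q n m : G q (S n) (S m) = Cadd (G q n m) (Cmul (Cpow q (S m)) (G q n (S m))).
Proof. reflexivity. Qed.

Lemma G_poch q n : forall m, (m <= n)%nat -> Cmul (Cmul (G q n m) (qpoch q m)) (qpoch q (n - m)) = qpoch q n.
Proof.
  induction n; intros m Hm.
  - destruct m; [|lia]. simpl. unfold qpoch; simpl. field.
  - destruct m as [|m].
    + rewrite G_n0, Nat.sub_0_r. change (qpoch q 0) with C1. field.
    + rewrite G_SS. replace (S n - S m)%nat with (n - m)%nat by lia.
      destruct (Nat.eq_dec m n) as [->|Hne].
      * rewrite (G_zero q n (S n)) by lia. rewrite Nat.sub_diag.
        rewrite qpoch_S. pose proof (IHn n (le_n _)) as H. rewrite Nat.sub_diag in H.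
        change (qpoch q 0) with C1 in *.
        transitivity (Cmul (Cmul (Cmul (G q n n) (qpoch q n)) C1) (Csub C1 (Cpow q (S n)))). field.
        rewrite H. reflexivity.
      * pose proof (IHn m ltac:(lia)) as H1. pose proof (IHn (S m) ltac:(lia)) as H2.
        replace (n - m)%nat with (S (n - S m)) in * by lia.
        rewrite !qpoch_S. rewrite qpoch_S in H1, H2.
        assert (E : Cpow q (S n) = Cmul (Cpow q (S m)) (Cpow q (S (n - S m)))).
        { rewrite <- Cpow_add. f_equal. lia. }
        set (x := Cpow q (S m)) in *. set (y := Cpow q (S (n - S m))) in *.
        transitivity (Cadd (Cmul (Cmul (Cmul (G q n m) (qpoch q m)) (Cmul (qpoch q (n - S m)) (Csub C1 y))) (Csub C1 x))
                           (Cmul x (Cmul (Cmul (Cmul (G q n (S m)) (Cmul (qpoch q m) (Csub C1 x))) (qpoch q (n - S m))) (Csub C1 y)))).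
        { field. }
        rewrite H1, H2, E. field.
Qed.

Lemma tri2 m : (2 * tri m + m = m * m)%nat.
Proof. induction m; simpl; lia. Qed.

Definition dist (m N : nat) : nat := if Nat.leb m N then (N - m)%nat else (m - N)%nat.

Lemma expo_id N m : (1 <= N)%nat -> (m <= 2 * N)%nat ->
  (2 * tri m + (2 * N - 1) * (2 * N - m) = 2 * tri N + (2 * N - 1) * N + dist m N * dist m N)%nat.
Proof.
  intros H1 H2. pose proof (tri2 m). pose proof (tri2 N). unfold dist.
  destruct (Nat.leb_spec m N).
  - remember (N - m)%nat as d. assert (N = m + d)%nat by lia. subst N.
    replace (2 * (m + d) - 1)%nat with (2*m+2*d-1)%nat by lia. replace (2 * (m + d) - m)%nat with (m + 2*d)%nat by lia.
    destruct m; destruct d; simpl in *; nia.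
  - remember (m - N)%nat as d. assert (m = N + d)%nat by lia. subst m.
    replace (2 * N - (N + d))%nat with (N - d)%nat by lia.
    nia.
Qed.

Lemma Cprod_seq_app f a b :
  Cprod_list (map f (seq 0 (a + b))) = Cmul (Cprod_list (map f (seq 0 a))) (Cprod_list (map f (seq a b))).
Proof. rewrite seq_app, map_app, Cprod_app. reflexivity. Qed.

Lemma Cprod_seq_offset f a n :
  Cprod_list (map f (seq a n)) = Cprod_list (map (fun i => f (a + i)%nat) (seq 0 n)).
Proof.
  revert f; induction a; intros f. reflexivity.
  rewrite Cprod_shift. rewrite IHa. reflexivity.
Qed.

Lemma Cprod_rev f N :
  Cprod_list (map (fun k => f (N - 1 - k)%nat) (seq 0 N)) = Cprod_list (map f (seq 0 N)).
Proof.
  induction N. reflexivity.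
  rewrite Cprod_first. rewrite (Cprod_map_ext _ (fun k => f (N - 1 - k)%nat)).
  2:{ intros k Hk. apply in_seq in Hk. f_equal. lia. }
  rewrite IHN. rewrite (Cprod_last f 0 N). replace (S N - 1 - 0)%nat with N by lia. simpl (0 + N)%nat. field.
Qed.

Lemma Cprod_pow2 x N : Cprod_list (map (fun k => Cpow x (2 * k)) (seq 0 N)) = Cpow x (2 * tri N).
Proof.
  induction N. reflexivity.
  rewrite Cprod_last, IHN, <- Cpow_add. f_equal. simpl. lia.
Qed.

Lemma Cpow_neq0 x n : x <> C0 -> Cpow x n <> C0.
Proof.
  intros H E. assert (Cnorm (Cpow x n) = 0) by (rewrite E; unfold Cnorm, C0; simpl; replace (0*0+0*0) with 0 by ring; apply sqrt_0).
  rewrite Cnorm_pow in H0. destruct (Req_dec (Cnorm x) 0) as [h|h]. apply Cnorm_eq0 in h. auto. apply (pow_nonzero _ n h). auto.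
Qed.

Definition Aodd (x : Cplx) (N : nat) : Cplx :=
  Cprod_list (map (fun i => Cadd C1 (Cpow x (2 * i + 1))) (seq 0 N)).

Lemma lhs_prod x N : (1 <= N)%nat ->
  Cprod_list (map (fun k => Cadd (Cpow x (2 * N - 1)) (Cmul (Cpow (Cpow x 2) k) C1)) (seq 0 (2 * N))) =
  Cmul (Cpow x (2 * tri N + (2 * N - 1) * N)) (Cmul (Aodd x N) (Aodd x N)).
Proof.
  intros HN. assert (Es : seq 0 (2 * N) = seq 0 (N + N)) by (f_equal; lia). rewrite Es, Cprod_seq_app.
  rewrite (Cprod_map_ext _ (fun k => Cmul (Cpow x (2 * k)) (Cadd C1 (Cpow x (2 * (N - 1 - k) + 1))))).
  2:{ intros k Hk. apply in_seq in Hk. rewrite <- Cpow_mul.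
      replace (Cpow x (2 * N - 1)) with (Cmul (Cpow x (2 * k)) (Cpow x (2 * (N - 1 - k) + 1))).
      2:{ rewrite <- Cpow_add. f_equal. lia. }
      field. }
  rewrite Cprod_map_mul, Cprod_pow2.
  rewrite (Cprod_rev (fun i => Cadd C1 (Cpow x (2 * i + 1)))).
  rewrite (Cprod_seq_offset _ N N).
  rewrite (Cprod_map_ext (fun i => Cadd (Cpow x (2 * N - 1)) (Cmul (Cpow (Cpow x 2) (N + i)) C1)) (fun i => Cmul (Cpow x (2 * N - 1)) (Cadd C1 (Cpow x (2 * i + 1))))).
  2:{ intros i Hi. rewrite <- Cpow_mul.
      replace (Cpow x (2 * (N + i))) with (Cmul (Cpow x (2 * N - 1)) (Cpow x (2 * i + 1))).
      2:{ rewrite <- Cpow_add. f_equal. lia. }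
      field. }
  rewrite Cprod_map_mul, Cprod_const, length_seq. unfold Aodd.
  rewrite Cpow_add, <- Cpow_mul. field.
Qed.

Lemma A_expand x N : x <> C0 -> (1 <= N)%nat ->
  Cmul (Aodd x N) (Aodd x N) =
  Csum_list (map (fun m => Cmul (G (Cpow x 2) (2 * N) m) (Cpow x (dist m N * dist m N))) (seq 0 (S (2 * N)))).
Proof.
  intros Hx HN.
  pose proof (qbinom (Cpow x 2) (Cpow x (2 * N - 1)) (2 * N) C1) as Q.
  rewrite lhs_prod in Q by auto. unfold Tq in Q.
  rewrite (Csum_ext _ (fun m => Cmul (Cpow x (2 * tri N + (2 * N - 1) * N))
       (Cmul (G (Cpow x 2) (2 * N) m) (Cpow x (dist m N * dist m N))))) in Q.
  2:{ intros m Hm. apply in_seq in Hm. rewrite Cpow_C1, <- !Cpow_mul.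
      replace (Cmul (Cmul (Cmul (G (Cpow x 2) (2 * N) m) (Cpow x (2 * tri m))) C1) (Cpow x ((2 * N - 1) * (2 * N - m))))
        with (Cmul (G (Cpow x 2) (2 * N) m) (Cpow x (2 * tri m + (2 * N - 1) * (2 * N - m)))) by (rewrite Cpow_add; field).
      rewrite expo_id by lia. rewrite Cpow_add. field. }
  rewrite Csum_scal in Q.
  pose proof (Cpow_neq0 x (2 * tri N + (2 * N - 1) * N) Hx) as Hne.
  set (a := Cpow x (2 * tri N + (2 * N - 1) * N)) in *.
  transitivity (Cdiv (Cmul a (Cmul (Aodd x N) (Aodd x N))) a). field; auto.
  rewrite Q. field. auto.
Qed.

Lemma binom_lower h n : 0 <= h -> 1 + INR n * h + INR n * (INR n - 1) / 2 * (h * h) <= (1 + h) ^ n.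
Proof.
  intros Hh. induction n.
  - simpl. lra.
  - rewrite S_INR. simpl pow.
    assert (0 <= INR n) by apply pos_INR.
    assert (0 <= INR n * (INR n - 1) / 2 * (h*h*h) \/ n = 0%nat) as [Hc|Hc].
    { destruct n. right; reflexivity. left. rewrite S_INR. 
      assert (0 <= INR n) by apply pos_INR.
      apply Rmult_le_pos. apply Rmult_le_pos. 2: lra. apply Rmult_le_pos; lra. 
      apply Rmult_le_pos; [apply Rmult_le_pos|]; lra. }
    + nra.
    + subst. simpl. lra.
Qed.

Lemma n_rho_n rho : 0 <= rho < 1 ->
  forall e, 0 < e -> exists N0, forall n, (N0 <= n)%nat -> INR n * rho ^ n < e.
Proof.
  intros Hr e He.
  destruct (Req_dec rho 0) as [H0|H0].
  - exists 1%nat. intros n Hn. subst. rewrite pow_i by lia. lra.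
  - set (h := / rho - 1).
    assert (Hh : 0 < h) by (unfold h; assert (1 < / rho) by (rewrite <- Rinv_1; apply Rinv_lt_contravar; lra); lra).
    assert (Hrh : rho * (1 + h) = 1) by (unfold h; field; auto).
    destruct (archimed (2 / (h * h * e))) as [Ha _].
    assert (0 <= IZR (up (2 / (h * h * e)))).
    { apply Rlt_le. eapply Rle_lt_trans; [|exact Ha]. apply Rlt_le. apply Rdiv_lt_0_compat. lra. 
      apply Rmult_lt_0_compat; [apply Rmult_lt_0_compat|]; lra. }
    destruct (IZN (up (2 / (h * h * e)))) as [M HM]. { apply le_IZR. simpl. lra. }
    exists (M + 2)%nat. intros n Hn.
    assert (HnM : IZR (up (2 / (h * h * e))) + 1 <= INR n).
    { rewrite HM. rewrite <- INR_IZR_INZ. rewrite <- S_INR. apply le_INR. lia. }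
    pose proof (binom_lower h n (Rlt_le _ _ Hh)) as B.
    assert (Hpn : rho ^ n * (1 + h) ^ n = 1) by (rewrite <- Rpow_mult_distr, Hrh; apply pow1).
    assert (0 < (1 + h) ^ n) by (apply pow_lt; lra).
    assert (0 <= rho ^ n) by (apply pow_le; lra).
    assert (Hn2 : 2 / (h*h*e) + 1 < INR n) by lra.
    assert (Hq : 2 < (INR n - 1) * (h * h * e)).
    { assert (0 < h*h*e) by (apply Rmult_lt_0_compat; [apply Rmult_lt_0_compat|]; lra).
      assert (2 / (h*h*e) * (h*h*e) = 2) by (field; lra). nra. }
    assert (INR n * (INR n - 1) / 2 * (h * h) <= (1 + h) ^ n) by (assert (0 <= INR n * h) by (apply Rmult_le_pos; [apply pos_INR|lra]); lra).
    (* INR n * rho^n = INR n / (1+h)^n *)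
    assert (INR n * rho ^ n * (INR n * (INR n - 1) / 2 * (h * h)) <= INR n) .
    { assert (0 <= INR n * rho ^ n) by (apply Rmult_le_pos; [apply pos_INR|auto]).
      apply Rle_trans with (INR n * rho ^ n * (1 + h) ^ n). apply Rmult_le_compat_l; auto.
      replace (INR n * rho ^ n * (1 + h) ^ n) with (INR n * (rho ^ n * (1 + h) ^ n)) by ring.
      rewrite Hpn. lra. }
    assert (1 < INR n) by (assert (0 <= 2 / (h*h*e)) by (apply Rlt_le, Rdiv_lt_0_compat; [lra|apply Rmult_lt_0_compat; [apply Rmult_lt_0_compat|]; lra]); lra).
    nra.
Qed.

Definition Rprod (l : list R) : R := fold_right Rmult 1 l.
Definition Rsum (l : list R) : R := fold_right Rplus 0 l.

Lemma Rprod_ge1 l : (forall a, In a l -> 0 <= a) -> 1 <= Rprod (map (fun a => 1 + a) l).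
Proof.
  induction l; simpl; intros H. lra.
  assert (0 <= a) by auto. assert (1 <= Rprod (map (fun a => 1 + a) l)) by auto. nra.
Qed.

Lemma Rprod_exp l : (forall a, In a l -> 0 <= a) -> Rprod (map (fun a => 1 + a) l) <= exp (Rsum l).
Proof.
  induction l; simpl; intros H. rewrite exp_0. lra.
  rewrite exp_plus. apply Rmult_le_compat.
  - assert (0 <= a) by auto. lra.
  - assert (1 <= Rprod (map (fun a => 1 + a) l)) by (apply Rprod_ge1; auto). lra.
  - apply exp_ineq1_le.
  - auto.
Qed.

Lemma Cprod_sub_bound (bs : list Cplx) :
  Cnorm (Cprod_list (map (fun b => Csub C1 b) bs)) <= Rprod (map (fun b => 1 + Cnorm b) bs) /\
  Cnorm (Csub (Cprod_list (map (fun b => Csub C1 b) bs)) C1) <= Rprod (map (fun b => 1 + Cnorm b) bs) - 1.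
Proof.
  induction bs as [|b bs IH]; simpl.
  - split. rewrite Cnorm_C1. lra. replace (Csub C1 C1) with C0 by field.
    unfold Cnorm, C0; simpl. replace (0*0+0*0) with 0 by ring. rewrite sqrt_0. lra.
  - destruct IH as [H1 H2]. set (P := Cprod_list (map (fun b => Csub C1 b) bs)) in *.
    set (Q := Rprod (map (fun b => 1 + Cnorm b) bs)) in *.
    assert (Hb : 0 <= Cnorm b) by apply Cnorm_ge0. assert (HP : 0 <= Cnorm P) by apply Cnorm_ge0.
    split.
    + rewrite Cnorm_mul. apply Rmult_le_compat; auto. apply Cnorm_ge0.
      eapply Rle_trans. apply Cnorm_sub. rewrite Cnorm_C1. lra.
    + replace (Csub (Cmul (Csub C1 b) P) C1) with (Csub (Csub P C1) (Cmul b P)) by field.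
      eapply Rle_trans. apply Cnorm_sub. rewrite Cnorm_mul.
      assert (Cnorm b * Cnorm P <= Cnorm b * Q) by (apply Rmult_le_compat_l; auto). nra.
Qed.

Lemma geo_tail r a l : 0 <= r < 1 -> Rsum (map (fun k => r ^ S k) (seq a l)) <= r ^ a / (1 - r).
Proof.
  intros Hr. revert a; induction l; intros a; simpl.
  - apply Rmult_le_pos. apply pow_le; lra. apply Rlt_le, Rinv_0_lt_compat; lra.
  - specialize (IHl (S a)). simpl in IHl.
    assert (0 <= r ^ a) by (apply pow_le; lra).
    assert (r * r ^ a / (1 - r) = r * (r ^ a / (1 - r))) by (field; lra).
    assert (r ^ a / (1 - r) * (1 - r) = r ^ a) by (field; lra).
    assert (0 <= r ^ a / (1 - r)) by (apply Rmult_le_pos; auto; apply Rlt_le, Rinv_0_lt_compat; lra).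
    nra.
Qed.

Lemma exp_m1 s : 0 <= s -> exp s - 1 <= s * exp s.
Proof.
  intros Hs. pose proof (exp_ineq1_le (- s)). pose proof (exp_pos s).
  assert (exp (-s) * exp s = 1) by (rewrite <- exp_plus; replace (-s+s) with 0 by ring; apply exp_0).
  nra.
Qed.

Definition Tl (q : Cplx) (a l : nat) : Cplx :=
  Cprod_list (map (fun k => Csub C1 (Cpow q (S k))) (seq a l)).

Definition Ebd (r : R) : R := exp (1 / (1 - r)).

Lemma Tl_bounds q a l : Cnorm q < 1 ->
  Cnorm (Tl q a l) <= Ebd (Cnorm q) /\
  Cnorm (Csub (Tl q a l) C1) <= Ebd (Cnorm q) * (Cnorm q ^ a / (1 - Cnorm q)).
Proof.
  intros Hq. set (r := Cnorm q). assert (Hr : 0 <= r < 1) by (split; [apply Cnorm_ge0|auto]).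
  pose proof (Cprod_sub_bound (map (fun k => Cpow q (S k)) (seq a l))) as [H1 H2].
  rewrite map_map in H1, H2. fold (Tl q a l) in H1, H2.
  rewrite map_map in H1, H2.
  replace (map (fun x => 1 + Cnorm (Cpow q (S x))) (seq a l)) with (map (fun a => 1 + a) (map (fun k => r ^ S k) (seq a l))) in H1, H2
    by (rewrite map_map; apply map_ext; intros; rewrite Cnorm_pow; reflexivity).
  pose proof (Rprod_exp (map (fun k => r ^ S k) (seq a l))) as HE.
  assert (Hpos : forall b, In b (map (fun k => r ^ S k) (seq a l)) -> 0 <= b).
  { intros b Hb. apply in_map_iff in Hb. destruct Hb as [k [<- _]]. apply pow_le; lra. }
  specialize (HE Hpos). pose proof (geo_tail r a l Hr) as HG.
  assert (Hra : r ^ a <= 1) by (apply pow_le1'; lra).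
  assert (Hs1 : r ^ a / (1 - r) <= 1 / (1 - r)) by (apply Rmult_le_compat_r; [apply Rlt_le, Rinv_0_lt_compat; lra| lra]).
  set (s := Rsum (map (fun k => r ^ S k) (seq a l))) in *.
  assert (0 <= s) by (unfold s; clear -Hpos; induction (map (fun k => r ^ S k) (seq a l)); simpl; [lra|];
    assert (0 <= a0) by (apply Hpos; left; auto); assert (0 <= Rsum l0) by (apply IHl0; intros; apply Hpos; right; auto); lra).
  assert (exp s <= Ebd r) by (unfold Ebd; destruct (Req_dec s (1 / (1 - r))) as [e|e]; [rewrite e; lra|left; apply exp_increasing; lra]).
  split. lra.
  pose proof (exp_m1 s H). 
  assert (s * exp s <= (r ^ a / (1 - r)) * Ebd r) by (apply Rmult_le_compat; auto; left; apply exp_pos).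
  lra.
Qed.

Definition fk (k : nat) (y : Cplx) : Cplx :=
  if Nat.even k then Csub C1 y else Cmul (Cadd C1 y) (Cadd C1 y).

Definition PP (N : nat) (x : Cplx) : Cplx :=
  Cprod_list (map (fun k => fk k (Cpow x k)) (seq 1 (2 * N))).

Lemma PP_eq N x : PP N x = Cmul (qpoch (Cpow x 2) N) (Cmul (Aodd x N) (Aodd x N)).
Proof.
  induction N.
  - unfold PP, qpoch, Aodd; simpl. field.
  - unfold PP. replace (2 * S N)%nat with (S (S (2 * N))) by lia.
    rewrite Cprod_last, Cprod_last. fold (PP N x). rewrite IHN.
    rewrite qpoch_S. unfold Aodd at 3 4. rewrite (Cprod_last _ 0 N). fold (Aodd x N). simpl (0 + N)%nat.
    replace (1 + 2 * N)%nat with (2 * N + 1)%nat by lia.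
    replace (1 + S (2 * N))%nat with (2 * S N)%nat by lia.
    unfold fk. rewrite Nat.even_odd, Nat.even_even. rewrite <- Cpow_mul. field.
Qed.

Lemma Csub1_neq0 b : Cnorm b < 1 -> Csub C1 b <> C0.
Proof.
  intros H E. assert (b = C1). { transitivity (Csub C1 (Csub C1 b)). field. rewrite E. field. }
  subst. rewrite Cnorm_C1 in H. lra.
Qed.

Lemma Cprod_neq0 l : (forall z, In z l -> z <> C0) -> Cprod_list l <> C0.
Proof.
  induction l; simpl; intros H. apply C1_neq_C0.
  intros E. assert (Ha : a <> C0) by auto. assert (Hl : Cprod_list l <> C0) by auto.
  apply Ha. transitivity (Cdiv (Cmul a (Cprod_list l)) (Cprod_list l)). field; auto.
  rewrite E. field. auto.
Qed.

Lemma Cnorm_pow_lt1 q k : Cnorm q < 1 -> Cnorm (Cpow q (S k)) < 1.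
Proof.
  intros H. rewrite Cnorm_pow. pose proof (Cnorm_ge0 q).
  apply pow_lt_1_compat; [lra|lia].
Qed.

Lemma qpoch_neq0 q n : Cnorm q < 1 -> qpoch q n <> C0.
Proof.
  intros H. apply Cprod_neq0. intros z Hz. apply in_map_iff in Hz. destruct Hz as [k [<- _]].
  apply Csub1_neq0, Cnorm_pow_lt1; auto.
Qed.

Lemma Cmul_neq0 a b : a <> C0 -> b <> C0 -> Cmul a b <> C0.
Proof.
  intros Ha Hb E. apply Hb. transitivity (Cdiv (Cmul a b) a). field; auto. rewrite E. field; auto.
Qed.

Lemma qpoch_app q a l : qpoch q (a + l) = Cmul (qpoch q a) (Tl q a l).
Proof. unfold qpoch, Tl. rewrite seq_app, map_app, Cprod_app. reflexivity. Qed.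

Lemma Ccancel a b c : a <> C0 -> Cmul a b = Cmul a c -> b = c.
Proof.
  intros Ha E. transitivity (Cdiv (Cmul a b) a). field; auto. rewrite E. field; auto.
Qed.

Lemma c_form q N m : Cnorm q < 1 -> (m <= 2 * N)%nat ->
  exists a1 l1 a2 l2, (N - dist m N <= a1)%nat /\ (N - dist m N <= a2)%nat /\
    Cmul (qpoch q N) (G q (2 * N) m) = Cmul (Tl q a1 l1) (Tl q a2 l2).
Proof.
  intros Hq Hm. pose proof (G_poch q (2 * N) m Hm) as HG.
  unfold dist. destruct (Nat.leb_spec m N).
  - exists m, (N - m)%nat, (2 * N - m)%nat, m. split; [lia|split;[lia|]].
    apply (Ccancel (Cmul (qpoch q m) (qpoch q (2 * N - m)))).
    { apply Cmul_neq0; apply qpoch_neq0; auto. }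
    transitivity (Cmul (qpoch q N) (Cmul (Cmul (G q (2 * N) m) (qpoch q m)) (qpoch q (2 * N - m)))). field.
    rewrite HG.
    assert (E1 : qpoch q N = Cmul (qpoch q m) (Tl q m (N - m))) by (rewrite <- qpoch_app; f_equal; lia).
    assert (E2 : qpoch q (2 * N) = Cmul (qpoch q (2 * N - m)) (Tl q (2 * N - m) m)) by (rewrite <- qpoch_app; f_equal; lia).
    rewrite E1, E2. field.
  - exists (2 * N - m)%nat, (m - N)%nat, m, (2 * N - m)%nat. split; [lia|split;[lia|]].
    apply (Ccancel (Cmul (qpoch q m) (qpoch q (2 * N - m)))).
    { apply Cmul_neq0; apply qpoch_neq0; auto. }
    transitivity (Cmul (qpoch q N) (Cmul (Cmul (G q (2 * N) m) (qpoch q m)) (qpoch q (2 * N - m)))). field.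
    rewrite HG.
    assert (E1 : qpoch q N = Cmul (qpoch q (2 * N - m)) (Tl q (2 * N - m) (m - N))) by (rewrite <- qpoch_app; f_equal; lia).
    assert (E2 : qpoch q (2 * N) = Cmul (qpoch q m) (Tl q m (2 * N - m))) by (rewrite <- qpoch_app; f_equal; lia).
    rewrite E1, E2. field.
Qed.

Definition Kbd (r : R) : R := (Ebd r * Ebd r + Ebd r) / (1 - r).

Lemma c_bound q N m : Cnorm q < 1 -> (m <= 2 * N)%nat ->
  Cnorm (Csub (Cmul (qpoch q N) (G q (2 * N) m)) C1) <= Kbd (Cnorm q) * Cnorm q ^ (N - dist m N).
Proof.
  intros Hq Hm. destruct (c_form q N m Hq Hm) as (a1 & l1 & a2 & l2 & H1 & H2 & ->).
  set (r := Cnorm q). assert (Hr : 0 <= r < 1) by (split; [apply Cnorm_ge0|auto]).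
  destruct (Tl_bounds q a1 l1 Hq) as [B1 B1']. destruct (Tl_bounds q a2 l2 Hq) as [B2 B2'].
  fold r in B1, B1', B2, B2'.
  replace (Csub (Cmul (Tl q a1 l1) (Tl q a2 l2)) C1) with
    (Cadd (Cmul (Tl q a1 l1) (Csub (Tl q a2 l2) C1)) (Csub (Tl q a1 l1) C1)) by field.
  eapply Rle_trans. apply Cnorm_add. rewrite Cnorm_mul.
  set (d := (N - dist m N)%nat) in *.
  assert (Hp1 : r ^ a1 <= r ^ d) by (apply pow_le_dec; [lra|auto]).
  assert (Hp2 : r ^ a2 <= r ^ d) by (apply pow_le_dec; [lra|auto]).
  assert (HE : 0 < Ebd r) by apply exp_pos.
  assert (Hi : 0 < / (1 - r)) by (apply Rinv_0_lt_compat; lra).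
  unfold Kbd. unfold Rdiv in *.
  assert (0 <= Cnorm (Tl q a1 l1)) by apply Cnorm_ge0.
  assert (0 <= Cnorm (Csub (Tl q a2 l2) C1)) by apply Cnorm_ge0.
  assert (Cnorm (Tl q a1 l1) * Cnorm (Csub (Tl q a2 l2) C1) <= Ebd r * (Ebd r * (r ^ d * / (1 - r)))).
  { apply Rmult_le_compat; auto. eapply Rle_trans. exact B2'. apply Rmult_le_compat_l. lra.
    apply Rmult_le_compat_r; lra. }
  assert (Cnorm (Csub (Tl q a1 l1) C1) <= Ebd r * (r ^ d * / (1 - r))).
  { eapply Rle_trans. exact B1'. apply Rmult_le_compat_l. lra. apply Rmult_le_compat_r; lra. }
  nra.
Qed.

Definition DD (N : nat) (x : Cplx) : Cplx :=
  Csum_list (map (fun m => Cpow x (dist m N * dist m N)) (seq 0 (S (2 * N)))).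

Lemma dist_S m N : dist (S m) (S N) = dist m N.
Proof. unfold dist. simpl. destruct (Nat.leb m N); lia. Qed.

Lemma DD_S N x : DD (S N) x = Cadd (DD N x) (Cscal 2 (Cpow x (S N * S N))).
Proof.
  unfold DD. replace (S (2 * S N)) with (S (S (S (2 * N)))) by lia.
  rewrite Csum_first. rewrite (Csum_ext _ (fun m => Cpow x (dist m N * dist m N))).
  2:{ intros. rewrite dist_S. reflexivity. }
  rewrite Csum_last.
  assert (dist 0 (S N) = S N) as -> by (unfold dist; simpl; lia).
  assert (dist (S (2 * N)) N = S N) as ->.
  { unfold dist. destruct (Nat.leb_spec (S (2 * N)) N); lia. }
  unfold Cscal. destruct (Cpow x (S N * S N)). 
  destruct (Csum_list (map (fun m : nat => Cpow x (dist m N * dist m N)) (seq 0 (S (2 * N))))).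
  unfold Cadd; simpl. f_equal; ring.
Qed.

Lemma DD_SN N x : DD (S N) x = SN x N.
Proof.
  induction N.
  - rewrite DD_S. unfold DD, SN. simpl. unfold dist; simpl.
    destruct (Cpow x 1) eqn:E. unfold Cadd, Cscal, C1, C0; simpl. f_equal; ring.
  - rewrite DD_S, IHN. unfold SN. rewrite (Csum_last _ (S N)).
    destruct (Csum_list (map (fun n : nat => Cpow x (S n * S n)) (seq 0 (S N)))).
    destruct (Cpow x (S (S N) * S (S N))). unfold Cadd, Cscal; simpl. f_equal; ring.
Qed.

Lemma PP_sum N x : x <> C0 -> (1 <= N)%nat ->
  PP N x = Csum_list (map (fun m => Cmul (Cmul (qpoch (Cpow x 2) N) (G (Cpow x 2) (2 * N) m))
                                         (Cpow x (dist m N * dist m N))) (seq 0 (S (2 * N)))).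
Proof.
  intros Hx HN. rewrite PP_eq, A_expand by auto. rewrite <- Csum_scal.
  apply Csum_ext. intros; field.
Qed.

Lemma Csum_bound_const (l : list Cplx) c :
  (forall z, In z l -> Cnorm z <= c) -> Cnorm (Csum_list l) <= INR (length l) * c.
Proof.
  induction l; intros H.
  - unfold Cnorm, C0; simpl. replace (0*0+0*0) with 0 by ring. rewrite sqrt_0. lra.
  - change (Csum_list (a :: l)) with (Cadd a (Csum_list l)). change (length (a :: l)) with (S (length l)).
    eapply Rle_trans. apply Cnorm_add. rewrite S_INR.
    assert (Cnorm a <= c) by (apply H; left; auto). assert (Cnorm (Csum_list l) <= INR (length l) * c) by (apply IHl; intros; apply H; right; auto). lra.
Qed.

Lemma Csum_sub {A} (f g : A -> Cplx) l :
  Csub (Csum_list (map f l)) (Csum_list (map g l)) = Csum_list (map (fun a => Csub (f a) (g a)) l).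
Proof. induction l; simpl. field. rewrite <- IHl. field. Qed.

Lemma PP_DD_bound N x : x <> C0 -> Cnorm x < 1 -> (1 <= N)%nat ->
  Cnorm (Csub (PP N x) (DD N x)) <= INR (S (2 * N)) * (Kbd (Cnorm x ^ 2) * Cnorm x ^ (2 * N - 1)).
Proof.
  intros Hx H1 HN. rewrite PP_sum by auto. unfold DD. rewrite Csum_sub.
  set (rho := Cnorm x). assert (Hr : 0 <= rho < 1) by (split; [apply Cnorm_ge0|auto]).
  assert (Hq : Cnorm (Cpow x 2) < 1) by (rewrite Cnorm_pow; fold rho; nra).
  replace (S (2 * N)) with (length (map (fun a => Csub (Cmul (Cmul (qpoch (Cpow x 2) N) (G (Cpow x 2) (2 * N) a)) (Cpow x (dist a N * dist a N))) (Cpow x (dist a N * dist a N))) (seq 0 (S (2 * N))))) at 2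
    by (rewrite length_map, length_seq; reflexivity).
  apply Csum_bound_const. intros z Hz. apply in_map_iff in Hz. destruct Hz as [m [<- Hm]]. apply in_seq in Hm.
  replace (Csub (Cmul (Cmul (qpoch (Cpow x 2) N) (G (Cpow x 2) (2 * N) m)) (Cpow x (dist m N * dist m N))) (Cpow x (dist m N * dist m N)))
    with (Cmul (Csub (Cmul (qpoch (Cpow x 2) N) (G (Cpow x 2) (2 * N) m)) C1) (Cpow x (dist m N * dist m N))) by field.
  rewrite Cnorm_mul, Cnorm_pow. fold rho.
  pose proof (c_bound (Cpow x 2) N m Hq ltac:(lia)) as Hc. rewrite Cnorm_pow in Hc. fold rho in Hc.
  assert (Hd : (dist m N <= N)%nat) by (unfold dist; destruct (Nat.leb_spec m N); lia).
  assert (HK : 0 <= Kbd (rho ^ 2)).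
  { unfold Kbd. apply Rmult_le_pos. pose proof (exp_pos (1 / (1 - rho^2))). unfold Ebd. nra.
    apply Rlt_le, Rinv_0_lt_compat. nra. }
  assert (Hpow : (rho ^ 2) ^ (N - dist m N) * rho ^ (dist m N * dist m N) <= rho ^ (2 * N - 1)).
  { rewrite <- pow_mult, <- pow_add. apply pow_le_dec. lra. nia. }
  assert (0 <= rho ^ (dist m N * dist m N)) by (apply pow_le; lra).
  assert (0 <= Cnorm (Csub (Cmul (qpoch (Cpow x 2) N) (G (Cpow x 2) (2 * N) m)) C1)) by apply Cnorm_ge0.
  eapply Rle_trans. apply Rmult_le_compat_r. auto. exact Hc.
  rewrite Rmult_assoc. apply Rmult_le_compat_l; auto.
Qed.

Lemma Kbd_pos r : 0 <= r < 1 -> 0 <= Kbd r.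
Proof.
  intros H. unfold Kbd, Ebd. pose proof (exp_pos (1 / (1 - r))).
  apply Rmult_le_pos. nra. apply Rlt_le, Rinv_0_lt_compat. lra.
Qed.

Theorem triple_product x L : x <> C0 -> Cnorm x < 1 -> Ccv (SN x) L ->
  Ccv (fun N => PP (S N) x) L.
Proof.
  intros Hx H1 HL. apply (Ccv_close (SN x)); auto.
  intros e He. set (rho := Cnorm x). assert (Hr : 0 <= rho < 1) by (split; [apply Cnorm_ge0|auto]).
  set (K := Kbd (rho ^ 2)). assert (HK : 0 <= K) by (apply Kbd_pos; split; [apply pow_le; lra| nra]).
  destruct (n_rho_n rho Hr (e / (3 * K + 1))) as [N0 HN0].
  { apply Rdiv_lt_0_compat; lra. }
  exists N0. intros N HN. rewrite <- DD_SN.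
  eapply Rle_lt_trans. apply PP_DD_bound; auto; lia. fold rho. fold K.
  replace (2 * S N - 1)%nat with (2 * N + 1)%nat by lia.
  specialize (HN0 (2 * N + 1)%nat ltac:(lia)).
  assert (HI : INR (S (2 * S N)) <= 3 * INR (2 * N + 1)).
  { replace 3 with (INR 3) by (simpl; ring). rewrite <- mult_INR. apply le_INR. lia. }
  assert (0 <= rho ^ (2 * N + 1)) by (apply pow_le; lra).
  assert (0 <= INR (2 * N + 1)) by apply pos_INR.
  assert (e / (3 * K + 1) * (3 * K + 1) = e) by (field; lra).
  assert (INR (S (2 * S N)) * (K * rho ^ (2 * N + 1)) <= 3 * K * (INR (2 * N + 1) * rho ^ (2 * N + 1))).
  { replace (INR (S (2 * S N)) * (K * rho ^ (2 * N + 1))) with (K * (INR (S (2 * S N)) * rho ^ (2 * N + 1))) by ring.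
    replace (3 * K * (INR (2 * N + 1) * rho ^ (2 * N + 1))) with (K * ((3 * INR (2 * N + 1)) * rho ^ (2 * N + 1))) by ring.
    apply Rmult_le_compat_l; auto. apply Rmult_le_compat_r; auto. }
  assert (0 <= INR (2 * N + 1) * rho ^ (2 * N + 1)) by (apply Rmult_le_pos; auto).
  nra.
Qed.

Lemma Rprod_app l1 l2 : Rprod (l1 ++ l2) = Rprod l1 * Rprod l2.
Proof. induction l1; simpl. ring. rewrite IHl1. ring. Qed.

Lemma Rprod_01 (c : nat -> R) l : (forall k, 0 <= c k <= 1) ->
  0 <= Rprod (map (fun k => 1 - c k) l) <= 1.
Proof.
  intros H. induction l; simpl. lra. specialize (H a). nra.
Qed.

Lemma weierstrass (c : nat -> R) l : (forall k, 0 <= c k <= 1) ->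
  1 - Rsum (map c l) <= Rprod (map (fun k => 1 - c k) l).
Proof.
  intros H. induction l; simpl. lra.
  pose proof (Rprod_01 c l H). specialize (H a). 
  assert (0 <= Rsum (map c l)) by (clear -H0 IHl; lra). nra.
Qed.

Definition W (rho : R) (n : nat) : R := Rprod (map (fun k => 1 - rho ^ S k) (seq 0 n)).

Lemma W_lower rho : 0 <= rho < 1 -> exists L, 0 < L /\ forall n, L <= W rho n.
Proof.
  intros Hr.
  assert (Hc : forall k, 0 <= rho ^ S k <= 1) by (intros; split; [apply pow_le; lra| apply pow_le1'; lra]).
  destruct (pow_lt_1_zero rho ltac:(rewrite Rabs_pos_eq; lra) ((1 - rho) / 2) ltac:(lra)) as [K0 HK0].
  specialize (HK0 K0 (le_n _)). rewrite Rabs_pos_eq in HK0 by (apply pow_le; lra).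
  assert (HW0all : forall K, 0 < W rho K).
  { intros K. unfold W. induction K. simpl; lra. rewrite seq_S, map_app, Rprod_app.
    apply Rmult_lt_0_compat. apply IHK.
    assert (rho ^ S (0 + K) < 1) by (apply pow_lt_1_compat; [lra|lia]).
    cbn [map Rprod fold_right]. lra. }
  pose proof (HW0all K0) as HW0.
  exists (W rho K0 / 2). split. lra. intros n.
  assert (Hsplit : forall a b, W rho (a + b) = W rho a * Rprod (map (fun k => 1 - rho ^ S k) (seq a b))).
  { intros a b. unfold W. rewrite seq_app, map_app, Rprod_app. reflexivity. }
  destruct (le_lt_dec n K0) as [h|h].
  - replace K0 with (n + (K0 - n))%nat in HW0 |- * by lia. rewrite Hsplit in HW0 |- *.
    pose proof (Rprod_01 (fun k => rho ^ S k) (seq n (K0 - n)) Hc).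
    assert (0 <= W rho n) by (unfold W; apply (Rprod_01 (fun k => rho ^ S k)); auto).
    set (T := Rprod (map (fun k => 1 - rho ^ S k) (seq n (K0 - n)))) in *.
    assert (W rho n * T <= W rho n * 1) by (apply Rmult_le_compat_l; lra). lra.
  - replace n with (K0 + (n - K0))%nat by lia. rewrite Hsplit.
    pose proof (weierstrass (fun k => rho ^ S k) (seq K0 (n - K0)) Hc).
    pose proof (geo_tail rho K0 (n - K0) Hr).
    assert (rho ^ K0 / (1 - rho) <= 1 / 2).
    { apply Rmult_le_reg_r with (1 - rho). lra. unfold Rdiv. rewrite Rmult_assoc, Rinv_l by lra. lra. }
    unfold Rsum in *. nra.
Qed.

Lemma Cnorm_prod (f : nat -> Cplx) l : Cnorm (Cprod_list (map f l)) = Rprod (map (fun k => Cnorm (f k)) l).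
Proof. induction l; simpl. apply Cnorm_C1. rewrite Cnorm_mul, IHl. reflexivity. Qed.

Lemma Rprod_le (f g : nat -> R) l : (forall k, 0 <= f k <= g k) -> Rprod (map f l) <= Rprod (map g l).
Proof.
  intros H. assert (forall l, 0 <= Rprod (map f l)).
  { induction l0; simpl. lra. apply Rmult_le_pos; auto. apply H. }
  induction l; simpl. lra. apply Rmult_le_compat; auto; apply H.
Qed.

Lemma fk_lower k y : Cnorm y <= 1 -> (1 - Cnorm y) * (1 - Cnorm y) <= Cnorm (fk k y).
Proof.
  intros H. pose proof (Cnorm_ge0 y). unfold fk. destruct (Nat.even k).
  - pose proof (Cnorm_sub_ge C1 y). rewrite Cnorm_C1 in H1. nra.
  - rewrite Cnorm_mul. pose proof (Cnorm_sub_ge C1 (Copp y)). rewrite Cnorm_C1, Cnorm_opp in H1.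
    replace (Csub C1 (Copp y)) with (Cadd C1 y) in H1 by field.
    apply Rmult_le_compat; lra.
Qed.

Lemma Rprod_sq (f : nat -> R) l : Rprod (map (fun k => f k * f k) l) = Rprod (map f l) * Rprod (map f l).
Proof. induction l; simpl. ring. rewrite IHl. ring. Qed.

Lemma PP_lower x : Cnorm x < 1 -> exists L, 0 < L /\ forall N, L <= Cnorm (PP N x).
Proof.
  intros H. set (rho := Cnorm x). assert (Hr : 0 <= rho < 1) by (split; [apply Cnorm_ge0|auto]).
  destruct (W_lower rho Hr) as [L [HL HW]]. exists (L * L). split. nra. intros N.
  unfold PP. rewrite Cnorm_prod.
  eapply Rle_trans. 2:{ apply (Rprod_le (fun k => (1 - rho ^ k) * (1 - rho ^ k))).
    intros k. split. assert (rho ^ k <= 1) by (apply pow_le1'; lra). apply Rmult_le_pos; lra.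
    replace (rho ^ k) with (Cnorm (Cpow x k)) by (rewrite Cnorm_pow; reflexivity).
    apply fk_lower. rewrite Cnorm_pow. fold rho. apply pow_le1'; lra. }
  rewrite Rprod_sq. rewrite <- seq_shift, map_map. fold (W rho (2 * N)).
  specialize (HW (2 * N)%nat). nra.
Qed.

Theorem theta3_neq0 tau : 0 < Cim tau -> theta3 tau <> C0.
Proof.
  intros H E. pose proof (theta3_lim tau H) as HL.
  assert (Hx : qx tau <> C0) by apply Cexp_neq0.
  pose proof (triple_product (qx tau) (theta3 tau) Hx (Cnorm_qx_lt1 tau H) HL) as T.
  destruct (PP_lower (qx tau) (Cnorm_qx_lt1 tau H)) as [L [HL0 HLb]].
  pose proof (Ccv_norm_lower _ _ L T (fun N => HLb (S N))) as Hn.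
  rewrite E in Hn. unfold Cnorm, C0 in Hn; simpl in Hn. replace (0*0+0*0) with 0 in Hn by ring. rewrite sqrt_0 in Hn. lra.
Qed.

From mathcomp Require all_boot all_order all_algebra.
From mathcomp Require Rstruct.
From mathcomp Require complex.
Module RU.
Import all_boot all_order all_algebra.
Import Rstruct.
Import complex.
Import GRing.Theory.

Local Open Scope ring_scope.

Definition phi (z : Cplx) : R[i] := Complex (fst z) (snd z).

Lemma phi_mul a b : phi (Cmul a b) = phi a * phi b.
Proof. by case: a => a1 a2; case: b => b1 b2. Qed.

Lemma phi_add a b : phi (Cadd a b) = phi a + phi b.
Proof. by case: a => a1 a2; case: b => b1 b2. Qed.

Lemma phi_one : phi Defs.C1 = 1.
Proof. by []. Qed.

Lemma phi_inj a b : phi a = phi b -> a = b.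
Proof. by case: a => a1 a2; case: b => b1 b2 [-> ->]. Qed.

Lemma phi_pow a k : phi (Cpow a k) = phi a ^+ k.
Proof. elim: k => [|k IH] //=. by rewrite phi_mul IH exprS. Qed.


Lemma phi_sub a b : phi (Cadd a (- fst b, - snd b)%R) = phi a - phi b.
Proof. by case: a => a1 a2; case: b => b1 b2. Qed.

Lemma seq_iota m n : List.seq m n = iota m n.
Proof. by elim: n m => [|n IH] m //=; rewrite IH. Qed.

Lemma phi_prod (f : nat -> Cplx) (l : seq nat) :
  phi (Cprod_list (List.map f l)) = \prod_(i <- l) phi (f i).
Proof.
  elim: l => [|a l IH]; first by rewrite big_nil.
  by rewrite big_cons /= phi_mul IH.
Qed.

Lemma RU_prod_mc (z y : R[i]) (n : nat) :
  n.-primitive_root z -> y != 0 ->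
  \prod_(i <- iota 0 n) (1 - z ^+ i * y) = 1 - y ^+ n.
Proof.
  move=> prim yn0.
  have := factor_Xn_sub_1 prim.
  move/(congr1 (fun p => p.[y^-1])).
  rewrite horner_prod !hornerE /=.
  under eq_bigr do rewrite !hornerE.
  move=> H.
  transitivity (\prod_(i <- iota 0 n) (y * (y^-1 - z ^+ i))).
    apply: eq_bigr => i _. by rewrite mulrBr mulfV // mulrC.
  have -> : iota 0 n = index_iota 0 n by rewrite /index_iota subn0.
  rewrite big_split /= prodr_const_nat subn0.
  rewrite H mulrBr exprVn mulfV ?expf_neq0 // mulr1.
  by [].
Qed.

Lemma phi_Csub a b : phi (Csub a b) = phi a - phi b.
Proof. by case: a => a1 a2; case: b => b1 b2. Qed.

Lemma phi_zero : phi Defs.C0 = 0.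
Proof. by []. Qed.

Lemma RU_prod (z y : Cplx) (n : nat) : (0 < n)%coq_nat -> Cpow z n = Defs.C1 ->
  (forall k, (0 < k)%coq_nat -> (k < n)%coq_nat -> Cpow z k <> Defs.C1) -> y <> Defs.C0 ->
  Cprod_list (List.map (fun w => Csub Defs.C1 (Cmul (Cpow z w) y)) (List.seq 0 n)) = Csub Defs.C1 (Cpow y n).
Proof.
  move=> n0 zn zk y0. apply: phi_inj.
  rewrite phi_prod phi_Csub phi_pow phi_one seq_iota.
  under eq_bigr do rewrite phi_Csub phi_mul phi_pow phi_one.
  apply: RU_prod_mc.
  - apply/andP; split; first by apply/ltP.
    apply/forallP => i. rewrite unity_rootE.
    case: (ltngtP i.+1 n) => h.
    + apply/eqP; apply/negP => /eqP E. apply: (zk i.+1); [by apply/ltP|by apply/ltP|].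
      apply: phi_inj. by rewrite phi_pow E.
    + by move: (ltn_ord i); rewrite ltnNge -ltnS h.
    + by rewrite h -phi_pow zn phi_one eqxx.
  - apply/eqP => E. apply: y0. apply: phi_inj. by rewrite E.
Qed.

End RU.

Definition zeta (p : nat) : Cplx := Cexp (0, 2 * PI / INR p).

Lemma zeta_pow p m : Cpow (zeta p) m = (cos (2 * PI * INR m / INR p), sin (2 * PI * INR m / INR p)).
Proof.
  unfold zeta. rewrite <- Cexp_nat. unfold Cexp, Cscal; simpl.
  rewrite Rmult_0_r, exp_0, !Rmult_1_l. f_equal; f_equal; unfold Rdiv; ring.
Qed.

Lemma zeta_p p : (0 < p)%nat -> Cpow (zeta p) p = C1.
Proof.
  intros Hp. rewrite zeta_pow. replace (2 * PI * INR p / INR p) with (2 * PI).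
  rewrite cos_2PI, sin_2PI. reflexivity.
  field. apply not_0_INR. lia.
Qed.

Lemma zeta_ne1 p r : (0 < r < p)%nat -> Cpow (zeta p) r <> C1.
Proof.
  intros H E. rewrite zeta_pow in E. injection E; intros Hs Hc.
  assert (Hp : 0 < INR p) by (apply lt_0_INR; lia).
  assert (Hr : 0 < INR r < INR p) by (split; [apply lt_0_INR|apply lt_INR]; lia).
  pose proof PI_RGT_0.
  set (a := 2 * PI * INR r / INR p) in *.
  assert (0 < a) by (unfold a; apply Rdiv_lt_0_compat; nra).
  assert (a < 2 * PI).
  { unfold a. apply Rmult_lt_reg_r with (INR p); auto. unfold Rdiv. rewrite Rmult_assoc, Rinv_l by lra. nra. }
  destruct (sin_eq_O_2PI_0 a) as [h|[h|h]]; try lra.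
  rewrite h, cos_PI in Hc. lra.
Qed.

Lemma zeta_pow_mod p m : (0 < p)%nat -> Cpow (zeta p) m = Cpow (zeta p) (m mod p).
Proof.
  intros Hp. rewrite (Nat.div_mod_eq m p) at 1. rewrite Cpow_add, Cpow_mul, zeta_p by auto.
  rewrite Cpow_C1. field.
Qed.

Lemma zeta_pow_1 p m : (0 < p)%nat -> Cpow (zeta p) m = C1 -> (m mod p = 0)%nat.
Proof.
  intros Hp E. rewrite zeta_pow_mod in E by auto.
  destruct (Nat.eq_dec (m mod p) 0) as [h|h]; auto.
  exfalso. apply (zeta_ne1 p (m mod p)); auto. split. lia. apply Nat.mod_upper_bound. lia.
Qed.

Lemma prime_mod_mul p a b : Znumtheory.prime (Z.of_nat p) -> ((a * b) mod p = 0)%nat ->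
  (a mod p = 0)%nat \/ (b mod p = 0)%nat.
Proof.
  intros Hp H.
  assert (Hp1 : (1 < p)%nat) by (destruct Hp as [H1 _]; lia).
  assert (Hd : Z.divide (Z.of_nat p) (Z.of_nat a * Z.of_nat b)).
  { rewrite <- Nat2Z.inj_mul. apply Nat.mod_divide in H; [|lia]. destruct H as [c Hc].
    exists (Z.of_nat c). rewrite Hc. lia. }
  destruct (prime_mult _ Hp _ _ Hd) as [[c Hc]|[c Hc]].
  - left. apply Nat.mod_divide; [lia|]. exists (Z.to_nat c). lia.
  - right. apply Nat.mod_divide; [lia|]. exists (Z.to_nat c). lia.
Qed.

Lemma Copp_pow_odd y p : Nat.odd p = true -> Cpow (Copp y) p = Copp (Cpow y p).
Proof.
  intros H. apply Nat.odd_spec in H. destruct H as [m ->].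
  induction m. change (Cmul (Copp y) C1 = Copp (Cmul y C1)). field.
  replace (2 * S m + 1)%nat with (2 + (2 * m + 1))%nat by lia. rewrite Cpow_add, IHm.
  rewrite (Cpow_add y 2). change (Cpow (Copp y) 2) with (Cmul (Copp y) (Cmul (Copp y) C1)).
  change (Cpow y 2) with (Cmul y (Cmul y C1)). field.
Qed.

Lemma even_mul_odd p k : Nat.odd p = true -> Nat.even (p * k) = Nat.even k.
Proof.
  intros H. rewrite Nat.even_mul. rewrite <- Nat.negb_odd, H. reflexivity.
Qed.

Lemma fk_mul_odd p k y : Nat.odd p = true -> fk (p * k) y = fk k y.
Proof. intros H. unfold fk. rewrite even_mul_odd by auto. reflexivity. Qed.

Lemma Cprod_single {A} (f : A -> Cplx) a : Cprod_list (map f (a :: nil)) = f a.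
Proof. unfold Cprod_list; simpl. field. Qed.

Section Block.
Variable p : nat.
Hypothesis hp : Znumtheory.prime (Z.of_nat p).
Hypothesis hodd : Nat.odd p = true.
Variable t : Cplx.
Hypothesis ht : t <> C0.

Let s := Cpow t p.
Let z := zeta p.

Lemma p_gt1 : (1 < p)%nat.
Proof. destruct hp as [H _]. lia. Qed.

Definition Hk (k : nat) : Cplx :=
  Cprod_list (map (fun w => fk k (Cpow (Cmul (Cpow z w) t) k)) (seq 0 p)).

Lemma Hk_nd k : (k mod p <> 0)%nat -> Hk k = fk k (Cpow s k).
Proof.
  intros Hk0. pose proof p_gt1 as Hp1. unfold Hk.
  rewrite (Cprod_map_ext _ (fun w => fk k (Cmul (Cpow (Cpow z k) w) (Cpow t k)))).
  2:{ intros w _. rewrite Cpow_Cmul, <- !Cpow_mul, Nat.mul_comm. reflexivity. }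
  set (z' := Cpow z k). set (y := Cpow t k).
  assert (Hy : y <> C0) by (apply Cpow_neq0; auto).
  assert (Hz1 : Cpow z' p = C1) by (unfold z'; rewrite <- Cpow_mul, Nat.mul_comm, Cpow_mul; unfold z; rewrite zeta_p by lia; apply Cpow_C1).
  assert (Hz2 : forall j, (0 < j)%nat -> (j < p)%nat -> Cpow z' j <> C1).
  { intros j Hj1 Hj2 E. unfold z' in E. rewrite <- Cpow_mul in E. apply zeta_pow_1 in E; [|lia].
    destruct (prime_mod_mul p k j hp E) as [h|h]; auto. rewrite Nat.mod_small in h; lia. }
  assert (Hys : Cpow y p = Cpow s k) by (unfold y, s; rewrite <- !Cpow_mul, Nat.mul_comm; reflexivity).
  unfold fk. destruct (Nat.even k).
  - rewrite RU.RU_prod; auto. rewrite Hys. reflexivity. lia.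
  - rewrite Cprod_map_mul.
    rewrite (Cprod_map_ext _ (fun w => Csub C1 (Cmul (Cpow z' w) (Copp y)))).
    2:{ intros; field. }
    rewrite RU.RU_prod; auto.
    2: lia.
    2:{ intros E. apply Hy. transitivity (Copp (Copp y)). field. rewrite E. unfold Copp, C0; simpl; f_equal; ring. }
    rewrite Copp_pow_odd by auto. rewrite Hys. field.
Qed.

Lemma Hk_d k : Hk (p * k) = Cpow (fk k (Cpow s k)) p.
Proof.
  pose proof p_gt1. unfold Hk.
  rewrite (Cprod_map_ext _ (fun w => fk k (Cpow s k))).
  2:{ intros w _. rewrite fk_mul_odd by auto. f_equal.
      rewrite Cpow_Cmul, <- Cpow_mul. replace (w * (p * k))%nat with (p * (w * k))%nat by lia.
      rewrite Cpow_mul. unfold z. rewrite zeta_p by lia. rewrite Cpow_C1. unfold s. rewrite <- Cpow_mul. field. }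
  rewrite Cprod_const, length_seq. reflexivity.
Qed.

Lemma block_id n :
  Cmul (Cprod_list (map Hk (seq 1 (p * n)))) (Cprod_list (map (fun k => fk k (Cpow s (p * k))) (seq 1 n)))
  = Cmul (Cprod_list (map (fun k => fk k (Cpow s k)) (seq 1 (p * n))))
         (Cprod_list (map (fun k => Cpow (fk k (Cpow s k)) p) (seq 1 n))).
Proof.
  pose proof p_gt1 as Hp1.
  induction n.
  - rewrite Nat.mul_0_r. simpl. field.
  - assert (Es : seq 1 (p * S n) = seq 1 (p * n) ++ seq (1 + p * n) (p - 1) ++ (p * S n)%nat :: nil).
    { replace (p * S n)%nat with (p * n + ((p - 1) + 1))%nat at 1 by lia.
      rewrite seq_app, seq_app. simpl. f_equal. f_equal. f_equal. lia. }
    rewrite Es, !map_app, !Cprod_app. rewrite seq_S, !map_app, !Cprod_app.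
    rewrite (Cprod_map_ext Hk (fun k => fk k (Cpow s k)) (seq (1 + p * n) (p - 1))).
    2:{ intros k Hk'. apply in_seq in Hk'. apply Hk_nd.
        replace k with ((k - (1 + p * n)) + 1 + n * p)%nat by lia. rewrite Nat.Div0.mod_add.
        rewrite Nat.mod_small by lia. lia. }
    set (X := Cprod_list (map Hk (seq 1 (p * n)))) in *.
    set (Y := Cprod_list (map (fun k => fk k (Cpow s (p * k))) (seq 1 n))) in *.
    set (U := Cprod_list (map (fun k => fk k (Cpow s k)) (seq 1 (p * n)))) in *.
    set (V := Cprod_list (map (fun k => Cpow (fk k (Cpow s k)) p) (seq 1 n))) in *.
    set (B := Cprod_list (map (fun k => fk k (Cpow s k)) (seq (1 + p * n) (p - 1)))).
    rewrite !Cprod_single.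
    rewrite Hk_d. rewrite fk_mul_odd by auto. replace (1 + n)%nat with (S n) by lia.
    transitivity (Cmul (Cmul X Y) (Cmul B (Cmul (Cpow (fk (S n) (Cpow s (S n))) p) (fk (S n) (Cpow s (p * S n)))))). field.
    rewrite IHn. field.
Qed.

End Block.

Lemma qx_scal_nat n tau : qx (Cscal (INR n) tau) = Cpow (qx tau) n.
Proof.
  unfold qx. rewrite <- Cexp_nat. f_equal. destruct tau; unfold Cscal, Cmul_i; simpl. f_equal; ring.
Qed.

Lemma qx_arg p w sigma : (0 < p)%nat ->
  qx (Cscal (/ INR p) (Cadd sigma (INR (2 * w), 0))) = Cmul (Cpow (zeta p) w) (qx (Cscal (/ INR p) sigma)).
Proof.
  intros Hp. assert (INR p <> 0) by (apply not_0_INR; lia).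
  unfold qx, zeta. rewrite <- Cexp_nat, <- Cexp_add. f_equal.
  rewrite mult_INR. destruct sigma; unfold Cscal, Cmul_i, Cadd; simpl. f_equal; field; auto.
Qed.

Lemma qx_split p sigma : (0 < p)%nat -> qx sigma = Cpow (qx (Cscal (/ INR p) sigma)) p.
Proof.
  intros Hp. rewrite <- qx_scal_nat. f_equal. assert (INR p <> 0) by (apply not_0_INR; lia).
  destruct sigma; unfold Cscal; simpl. f_equal; field; auto.
Qed.

Lemma Cim_scal c tau : Cim (Cscal c tau) = c * Cim tau.
Proof. reflexivity. Qed.

Lemma Cim_add_real tau a : Cim (Cadd tau (a, 0)) = Cim tau.
Proof. unfold Cim, Cadd; simpl; ring. Qed.

Lemma theta_PP_lim tau : 0 < Cim tau -> Ccv (fun N => PP (S N) (qx tau)) (theta3 tau).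
Proof.
  intros H. apply triple_product. apply Cexp_neq0. apply Cnorm_qx_lt1; auto. apply theta3_lim; auto.
Qed.

Lemma theta_PP_lim_p tau p : (0 < p)%nat -> 0 < Cim tau ->
  Ccv (fun M => PP (p * S M) (qx tau)) (theta3 tau).
Proof.
  intros Hp H. pose proof (Ccv_subseq _ _ (fun M => (p * S M - 1)%nat) ltac:(intros; cbv beta; nia) (theta_PP_lim tau H)) as T.
  eapply Ccv_ext; [|exact T]. intros M. cbv beta. f_equal. nia.
Qed.

Lemma PP_prod_swap N (xs : nat -> Cplx) l :
  Cprod_list (map (fun w => PP N (xs w)) l) =
  Cprod_list (map (fun k => Cprod_list (map (fun w => fk k (Cpow (xs w) k)) l)) (seq 1 (2 * N))).
Proof. unfold PP. apply (Cprod_swap (fun w k => fk k (Cpow (xs w) k))). Qed.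

Theorem level1 p sigma : Znumtheory.prime (Z.of_nat p) -> Nat.odd p = true -> 0 < Cim sigma ->
  Cmul (theta3 (Cscal (INR p) sigma))
       (Cprod_list (map (fun w => theta3 (Cscal (/ INR p) (Cadd sigma (INR (2 * w), 0)))) (seq 0 p)))
  = Cpow (theta3 sigma) (S p).
Proof.
  intros hp hodd Hs.
  pose proof (p_gt1 p hp) as Hp1.
  assert (HpR : 0 < INR p) by (apply lt_0_INR; lia).
  set (t := qx (Cscal (/ INR p) sigma)).
  assert (Ht : t <> C0) by apply Cexp_neq0.
  assert (Hs1 : qx sigma = Cpow t p) by (apply qx_split; lia).
  assert (Hs2 : qx (Cscal (INR p) sigma) = Cpow (Cpow t p) p) by (rewrite qx_scal_nat, Hs1; reflexivity).
  assert (SEQ : forall M, Cmul (PP (S M) (Cpow (Cpow t p) p))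
                  (Cprod_list (map (fun w => PP (p * S M) (Cmul (Cpow (zeta p) w) t)) (seq 0 p)))
                = Cmul (PP (p * S M) (Cpow t p)) (Cpow (PP (S M) (Cpow t p)) p)).
  { intros M. rewrite PP_prod_swap.
    pose proof (block_id p hp hodd t Ht (2 * S M)) as BI.
    unfold Hk in BI.
    replace (2 * (p * S M))%nat with (p * (2 * S M))%nat by lia.
    unfold PP. rewrite <- Cprod_map_pow.
    rewrite (Cprod_map_ext (fun k => fk k (Cpow (Cpow (Cpow t p) p) k)) (fun k => fk k (Cpow (Cpow t p) (p * k)))).
    2:{ intros k _. rewrite <- Cpow_mul. reflexivity. }
    transitivity (Cmul (Cprod_list (map (fun k => Cprod_list (map (fun w => fk k (Cpow (Cmul (Cpow (zeta p) w) t) k)) (seq 0 p))) (seq 1 (p * (2 * S M)))))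
                  (Cprod_list (map (fun k => fk k (Cpow (Cpow t p) (p * k))) (seq 1 (2 * S M))))). field.
    rewrite BI. replace (2 * (p * S M))%nat with (p * (2 * S M))%nat by lia. reflexivity. }
  assert (L1 : Ccv (fun M => PP (S M) (Cpow (Cpow t p) p)) (theta3 (Cscal (INR p) sigma))).
  { rewrite <- Hs2. apply theta_PP_lim. rewrite Cim_scal. nra. }
  assert (L2 : Ccv (fun M => Cprod_list (map (fun w => PP (p * S M) (Cmul (Cpow (zeta p) w) t)) (seq 0 p)))
                   (Cprod_list (map (fun w => theta3 (Cscal (/ INR p) (Cadd sigma (INR (2 * w), 0)))) (seq 0 p)))).
  { apply (Ccv_prod (fun M w => PP (p * S M) (Cmul (Cpow (zeta p) w) t))). intros w _.
    unfold t. rewrite <- qx_arg by lia. apply theta_PP_lim_p. lia.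
    rewrite Cim_scal, Cim_add_real. apply Rmult_lt_0_compat; auto. apply Rinv_0_lt_compat; auto. }
  assert (L3 : Ccv (fun M => PP (p * S M) (Cpow t p)) (theta3 sigma)).
  { rewrite <- Hs1. apply theta_PP_lim_p; auto; lia. }
  assert (L4 : Ccv (fun M => PP (S M) (Cpow t p)) (theta3 sigma)).
  { rewrite <- Hs1. apply theta_PP_lim; auto. }
  pose proof (Ccv_mul _ _ _ _ L1 L2) as LL.
  pose proof (Ccv_mul _ _ _ _ L3 (Ccv_pow _ _ p L4)) as RR.
  eapply Ccv_ext in LL. 2:{ intros M. apply SEQ. }
  rewrite (Ccv_unique _ _ _ LL RR). reflexivity.
Qed.

Lemma theta3_qx tau tau' : qx tau = qx tau' -> theta3 tau = theta3 tau'.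
Proof.
  intros H. unfold theta3.
  assert (E : forall n, theta_term tau n = theta_term tau' n) by (intros; rewrite !theta_term_pow, H; reflexivity).
  assert (E1 : (fun n => fst (theta_term tau (S n))) = (fun n => fst (theta_term tau' (S n)))).
  { apply functional_extensionality; intros; rewrite E; reflexivity. }
  assert (E2 : (fun n => snd (theta_term tau (S n))) = (fun n => snd (theta_term tau' (S n)))).
  { apply functional_extensionality; intros; rewrite E; reflexivity. }
  rewrite E1, E2. reflexivity.
Qed.

Lemma theta3_period tau w : theta3 (Cadd tau (INR (2 * w), 0)) = theta3 tau.
Proof.
  apply theta3_qx. unfold qx.
  replace (Cscal PI (Cmul_i (Cadd tau (INR (2 * w), 0)))) with (Cadd (Cscal PI (Cmul_i tau)) (0, 2 * INR w * PI)).
  2:{ rewrite mult_INR. destruct tau; unfold Cscal, Cmul_i, Cadd; simpl. f_equal; ring. }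
  rewrite Cexp_add. unfold Cexp at 2. simpl. rewrite exp_0.
  replace (2 * INR w * PI) with (0 + 2 * INR w * PI) by ring. rewrite cos_period, sin_period, cos_0, sin_0.
  destruct (Cexp (Cscal PI (Cmul_i tau))). unfold Cmul; simpl. f_equal; ring.
Qed.

Lemma Cprod_seq_mul (f : nat -> Cplx) a b :
  Cprod_list (map f (seq 0 (a * b))) =
  Cprod_list (map (fun w => Cprod_list (map (fun u => f (a * w + u)%nat) (seq 0 a))) (seq 0 b)).
Proof.
  induction b.
  - rewrite Nat.mul_0_r. reflexivity.
  - replace (a * S b)%nat with (a * b + a)%nat by lia. rewrite seq_app, map_app, Cprod_app, IHb.
    rewrite (Cprod_last _ 0 b). f_equal. rewrite (Cprod_seq_offset f (0 + a * b) a). reflexivity.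
Qed.

Section General.
Variable p : nat.
Hypothesis hp : Znumtheory.prime (Z.of_nat p).
Hypothesis hodd : Nat.odd p = true.

Lemma p_pos : (0 < p)%nat.
Proof. pose proof (p_gt1 p hp). lia. Qed.

Lemma INR_p_neq0 : INR p <> 0.
Proof. apply not_0_INR. pose proof p_pos. lia. Qed.

Lemma INR_pj_pos j : 0 < INR (p ^ j).
Proof. rewrite pow_INR. apply pow_lt. apply lt_0_INR. apply p_pos. Qed.

Definition argv (j v : nat) (sigma : Cplx) : Cplx :=
  Cscal (/ INR (p ^ j)) (Cadd sigma (INR (2 * v), 0)).

Definition Fj (j : nat) (sigma : Cplx) : Cplx :=
  Cprod_list (map (fun v => theta3 (argv j v sigma)) (seq 0 (p ^ j))).

Lemma Im_argv j v sigma : 0 < Cim sigma -> 0 < Cim (argv j v sigma).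
Proof.
  intros H. unfold argv. rewrite Cim_scal, Cim_add_real. apply Rmult_lt_0_compat; auto.
  apply Rinv_0_lt_compat, INR_pj_pos.
Qed.

Lemma Im_scal_p sigma : 0 < Cim sigma -> 0 < Cim (Cscal (INR p) sigma).
Proof. intros H. rewrite Cim_scal. apply Rmult_lt_0_compat; auto. apply lt_0_INR, p_pos. Qed.

Lemma arg_split j u w sigma :
  argv (S j) (p ^ j * w + u) sigma = Cscal (/ INR p) (Cadd (argv j u sigma) (INR (2 * w), 0)).
Proof.
  unfold argv. pose proof INR_p_neq0. pose proof (INR_pj_pos j).
  rewrite !mult_INR, plus_INR, mult_INR. rewrite Nat.pow_succ_r', mult_INR.
  destruct sigma; unfold Cscal, Cadd; simpl. f_equal; field; lra.
Qed.

Lemma arg_p j u w sigma :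
  Cscal (INR p) (argv (S j) (p ^ j * w + u) sigma) = Cadd (argv j u sigma) (INR (2 * w), 0).
Proof.
  unfold argv. pose proof INR_p_neq0. pose proof (INR_pj_pos j).
  rewrite !mult_INR, plus_INR, mult_INR. rewrite Nat.pow_succ_r', mult_INR.
  destruct sigma; unfold Cscal, Cadd; simpl. f_equal; field; lra.
Qed.

Definition Qj (j : nat) (sigma : Cplx) : Cplx :=
  Cprod_list (map (fun u => theta3 (Cscal (INR p) (argv j u sigma))) (seq 0 (p ^ j))).

Lemma Fj_rec j sigma : 0 < Cim sigma -> Cmul (Fj (S j) sigma) (Qj j sigma) = Cpow (Fj j sigma) (S p).
Proof.
  intros H. unfold Fj, Qj. rewrite Nat.pow_succ_r', Nat.mul_comm, Cprod_seq_mul.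
  rewrite (Cprod_map_ext (fun w => Cprod_list (map (fun u => theta3 (argv (S j) (p ^ j * w + u) sigma)) (seq 0 (p ^ j))))
              (fun w => Cprod_list (map (fun u => theta3 (Cscal (/ INR p) (Cadd (argv j u sigma) (INR (2 * w), 0)))) (seq 0 (p ^ j))))).
  2:{ intros w _. apply Cprod_map_ext. intros u _. rewrite arg_split. reflexivity. }
  rewrite (Cprod_swap (fun w u => theta3 (Cscal (/ INR p) (Cadd (argv j u sigma) (INR (2 * w), 0))))).
  rewrite <- Cprod_map_mul, <- Cprod_map_pow. apply Cprod_map_ext. intros u _.
  rewrite <- (level1 p (argv j u sigma) hp hodd (Im_argv j u sigma H)). field.
Qed.

Lemma Fj_0 sigma : Fj 0 sigma = theta3 sigma.
Proof.
  unfold Fj. simpl. unfold Cprod_list; simpl. unfold argv. simpl.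
  replace (Cscal (/ 1) (Cadd sigma (0, 0))) with sigma. field.
  destruct sigma; unfold Cscal, Cadd; simpl. f_equal; field.
Qed.

Lemma Qj_0 sigma : Qj 0 sigma = theta3 (Cscal (INR p) sigma).
Proof.
  unfold Qj. simpl. unfold Cprod_list; simpl. unfold argv. simpl.
  replace (Cscal (/ 1) (Cadd sigma (0, 0))) with sigma. field.
  destruct sigma; unfold Cscal, Cadd; simpl. f_equal; field.
Qed.

Lemma Qj_S j sigma : Qj (S j) sigma = Cpow (Fj j sigma) p.
Proof.
  unfold Qj, Fj. rewrite Nat.pow_succ_r', Nat.mul_comm, Cprod_seq_mul.
  rewrite (Cprod_map_ext _ (fun w => Cprod_list (map (fun u => theta3 (argv j u sigma)) (seq 0 (p ^ j))))).
  2:{ intros w _. apply Cprod_map_ext. intros u _. rewrite arg_p, theta3_period. reflexivity. }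
  rewrite Cprod_const, length_seq. reflexivity.
Qed.
End General.

Fixpoint Asum (p n : nat) : nat := match n with O => O | S k => (Asum p k + p ^ k)%nat end.

Section Closed.
Variable p : nat.
Hypothesis hp : Znumtheory.prime (Z.of_nat p).
Hypothesis hodd : Nat.odd p = true.

Lemma Fj_closed2 sigma : 0 < Cim sigma -> forall j,
  Cmul (Fj p j sigma) (Cpow (theta3 (Cscal (INR p) sigma)) (Asum p j)) = Cpow (theta3 sigma) (Asum p (S j)) /\
  Cmul (Fj p (S j) sigma) (Cpow (theta3 (Cscal (INR p) sigma)) (Asum p (S j))) = Cpow (theta3 sigma) (Asum p (S (S j))).
Proof.
  intros Hs. set (A := theta3 sigma). set (B := theta3 (Cscal (INR p) sigma)).
  assert (HA : A <> C0) by (apply theta3_neq0; auto).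
  induction j.
  - split.
    + rewrite Fj_0. simpl. fold A. field.
    + pose proof (Fj_rec p hp hodd 0 sigma Hs) as R. rewrite Qj_0, Fj_0 in R. fold A B in R.
      simpl Asum. simpl pow. rewrite Nat.mul_1_r.
      rewrite Cpow_1, R. f_equal.
  - destruct IHj as [h0 h1]. split; auto.
    pose proof (Fj_rec p hp hodd (S j) sigma Hs) as R. rewrite (Qj_S p hp) in R. fold A B in R.
    set (F0 := Fj p j sigma) in *. set (F1 := Fj p (S j) sigma) in *. set (F2 := Fj p (S (S j)) sigma) in *.
    set (a0 := Asum p j) in *.
    assert (E1 : Asum p (S j) = (a0 + p ^ j)%nat) by reflexivity.
    assert (E2 : Asum p (S (S j)) = (a0 + p ^ j + p * p ^ j)%nat) by (simpl; fold a0; lia).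
    assert (E3 : Asum p (S (S (S j))) = (a0 + p ^ j + p * p ^ j + p * (p * p ^ j))%nat) by (simpl; fold a0; lia).
    rewrite E1 in h0, h1. rewrite E2 in h1 |- *. rewrite E3.
    set (P := (p ^ j)%nat) in *.
    apply (Ccancel (Cpow A (p * (a0 + P)))). apply Cpow_neq0; auto.
    assert (X : Cpow A (p * (a0 + P)) = Cmul (Cpow F0 p) (Cpow B (a0 * p))).
    { rewrite (Cpow_mul B a0 p), <- Cpow_Cmul, h0, <- Cpow_mul, Nat.mul_comm. reflexivity. }
    rewrite X.
    transitivity (Cmul (Cmul F2 (Cpow F0 p)) (Cpow B (a0 * p + (a0 + P + p * P)))).
    { rewrite (Cpow_add B (a0 * p)). field. }
    rewrite R. replace (a0 * p + (a0 + P + p * P))%nat with ((a0 + P) * S p)%nat by nia.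
    rewrite (Cpow_mul B (a0 + P) (S p)), <- Cpow_Cmul, h1, <- Cpow_mul.
    rewrite <- X, <- Cpow_add. f_equal. nia.
Qed.

Lemma Fj_closed sigma j : 0 < Cim sigma ->
  Cmul (Fj p j sigma) (Cpow (theta3 (Cscal (INR p) sigma)) (Asum p j)) = Cpow (theta3 sigma) (Asum p (S j)).
Proof. intros H. apply (Fj_closed2 sigma H j). Qed.

End Closed.

Lemma gcd_cond p a b v : Znumtheory.prime (Z.of_nat p) -> (1 <= a)%nat -> (1 <= b)%nat ->
  Nat.eqb (Nat.gcd (Nat.gcd (p ^ a) v) (p ^ b)) 1 = negb (Nat.eqb (v mod p) 0).
Proof.
  intros hp Ha Hb. assert (Hp1 : (1 < p)%nat) by (destruct hp as [H _]; lia).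
  destruct (Nat.eqb_spec (v mod p) 0) as [h|h]; simpl.
  - apply Nat.eqb_neq. intros E.
    assert (D : Nat.divide p (Nat.gcd (Nat.gcd (p ^ a) v) (p ^ b))).
    { apply Nat.gcd_greatest. apply Nat.gcd_greatest.
      + exists (p ^ (a - 1))%nat. rewrite Nat.mul_comm, <- Nat.pow_succ_r'. f_equal. lia.
      + apply Nat.mod_divide; lia.
      + exists (p ^ (b - 1))%nat. rewrite Nat.mul_comm, <- Nat.pow_succ_r'. f_equal. lia. }
    rewrite E in D. apply Nat.divide_1_r in D. lia.
  - apply Nat.eqb_eq.
    assert (Hnd : ~ (Z.of_nat p | Z.of_nat v)%Z).
    { intros [k Hk]. apply h. apply Nat.mod_divide; [lia|]. exists (Z.to_nat k).
      assert (0 <= k)%Z by nia. apply Nat2Z.inj. rewrite Nat2Z.inj_mul, Z2Nat.id; lia. }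
    assert (R1 : rel_prime (Z.of_nat v) (Z.of_nat p)) by (apply rel_prime_sym, prime_rel_prime; auto).
    assert (R2 : forall n, rel_prime (Z.of_nat v) (Z.of_nat (p ^ n))).
    { induction n. simpl. apply rel_prime_sym, rel_prime_1. rewrite Nat.pow_succ_r', Nat2Z.inj_mul. apply rel_prime_mult; auto. }
    assert (G : Nat.gcd (p ^ a) v = 1%nat).
    { destruct (R2 a) as [_ _ Hg].
      assert (D1 : (Z.of_nat (Nat.gcd (p ^ a) v) | Z.of_nat v)%Z).
      { destruct (Nat.gcd_divide_r (p ^ a) v) as [k Hk]. exists (Z.of_nat k). rewrite Hk at 1. apply Nat2Z.inj_mul. }
      assert (D2 : (Z.of_nat (Nat.gcd (p ^ a) v) | Z.of_nat (p ^ a))%Z).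
      { destruct (Nat.gcd_divide_l (p ^ a) v) as [k Hk]. exists (Z.of_nat k). rewrite Hk at 1. apply Nat2Z.inj_mul. }
      specialize (Hg _ D1 D2). apply Z.divide_1_r_nonneg in Hg; lia. }
    rewrite G. apply Nat.divide_1_r, Nat.gcd_divide_l.
Qed.

Lemma Cprod_filter (g : nat -> Cplx) (P : nat -> bool) l :
  Cprod_list (map g (filter P l)) = Cprod_list (map (fun v => if P v then g v else C1) l).
Proof. induction l; simpl. reflexivity. destruct (P a); simpl; rewrite IHl; try field; reflexivity. Qed.

Lemma filter_all (P : nat -> bool) l : (forall v, In v l -> P v = true) -> filter P l = l.
Proof. induction l; simpl; intros H. reflexivity. rewrite H by auto. rewrite IHl; auto. Qed.

Section Final.
Variable p : nat.
Hypothesis hp : Znumtheory.prime (Z.of_nat p).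
Hypothesis hodd : Nat.odd p = true.
Variable l : nat.
Variable tau : Cplx.
Hypothesis htau : 0 < Cim tau.

Definition sg (k : nat) : Cplx := Cscal (INR (p ^ k)) tau.
Definition Tk (k : nat) : Cplx := theta3 (sg k).

Lemma sg_Im k : 0 < Cim (sg k).
Proof. unfold sg. rewrite Cim_scal. apply Rmult_lt_0_compat; auto. apply INR_pj_pos; auto. Qed.

Lemma sg_S k : Cscal (INR p) (sg k) = sg (S k).
Proof. unfold sg. rewrite Nat.pow_succ_r', mult_INR. destruct tau; unfold Cscal; simpl; f_equal; ring. Qed.

Lemma Tk_neq0 k : Tk k <> C0.
Proof. apply theta3_neq0, sg_Im. Qed.

Lemma closed_k j k : Cmul (Fj p j (sg k)) (Cpow (Tk (S k)) (Asum p j)) = Cpow (Tk k) (Asum p (S j)).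
Proof. unfold Tk. rewrite <- sg_S. apply Fj_closed; auto. apply sg_Im. Qed.

Lemma inner_full j : (forall v, In v (seq 0 (p ^ j)) -> Nat.eqb (Nat.gcd (Nat.gcd (p ^ (l - j)) v) (p ^ j)) 1 = true) ->
  inner_prod p l j tau = Fj p j (sg (l - j)).
Proof.
  intros H. unfold inner_prod. rewrite filter_all by auto. reflexivity.
Qed.

Lemma inner_0 : inner_prod p l 0 tau = Tk l.
Proof.
  rewrite inner_full. rewrite Fj_0, Nat.sub_0_r. reflexivity.
  intros v _. apply Nat.eqb_eq. simpl. apply Nat.divide_1_r, Nat.gcd_divide_r.
Qed.

Lemma inner_l : inner_prod p l l tau = Fj p l (sg 0).
Proof.
  rewrite inner_full. rewrite Nat.sub_diag. reflexivity.
  intros v _. apply Nat.eqb_eq. rewrite Nat.sub_diag. simpl (p ^ 0)%nat.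
  assert (Nat.gcd 1 v = 1%nat) as -> by (apply Nat.divide_1_r, Nat.gcd_divide_l).
  apply Nat.divide_1_r, Nat.gcd_divide_l.
Qed.

Lemma argv_div j u sigma : argv p (S j) (p * u) (Cscal (INR p) sigma) = argv p j u sigma.
Proof.
  unfold argv. pose proof (INR_p_neq0 p hp). pose proof (INR_pj_pos p hp j).
  rewrite Nat.pow_succ_r', !mult_INR. destruct sigma; unfold Cscal, Cadd; simpl. f_equal; field; lra.
Qed.

Lemma inner_mid j : (1 <= j)%nat -> (j + 1 <= l)%nat ->
  Cmul (inner_prod p l j tau) (Fj p (j - 1) (sg (l - j - 1))) = Fj p j (sg (l - j)).
Proof.
  intros H1 H2. destruct j as [|j']; [lia|]. replace (S j' - 1)%nat with j' by lia.
  assert (Hs : sg (l - S j') = Cscal (INR p) (sg (l - S j' - 1))).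
  { rewrite sg_S. f_equal. lia. }
  set (sigma' := sg (l - S j' - 1)) in *.
  pose proof (p_gt1 p hp) as Hp1.
  unfold inner_prod, Fj.
  rewrite (Cprod_filter _ _ (seq 0 (p ^ S j'))).
  set (g := fun v => theta3 (argv p (S j') v (sg (l - S j')))).
  rewrite (Cprod_map_ext _ (fun v => if negb (Nat.eqb (v mod p) 0) then g v else C1)).
  2:{ intros v _. rewrite gcd_cond by (auto; lia). reflexivity. }
  rewrite (Cprod_map_ext (fun v => theta3 (argv p (S j') v (sg (l - S j'))))
             (fun v => Cmul (if negb (Nat.eqb (v mod p) 0) then g v else C1) (if negb (Nat.eqb (v mod p) 0) then C1 else g v))).
  2:{ intros v _. destruct (negb (v mod p =? 0)%nat); unfold g; field. }
  rewrite Cprod_map_mul. f_equal.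
  rewrite Nat.pow_succ_r', Cprod_seq_mul. apply Cprod_map_ext. intros u _.
  replace (seq 0 p) with (seq 0 (S (p - 1))) by (f_equal; lia).
  rewrite Cprod_first.
  rewrite (Cprod_map_ext _ (fun _ => C1)).
  2:{ intros r Hr. apply in_seq in Hr.
      replace (p * u + S r)%nat with (S r + u * p)%nat by ring. rewrite Nat.Div0.mod_add, Nat.mod_small by lia.
      reflexivity. }
  rewrite Cprod_const, Cpow_C1. rewrite Nat.add_0_r.
  replace ((p * u) mod p)%nat with 0%nat by (rewrite Nat.mul_comm; symmetry; apply Nat.Div0.mod_mul).
  simpl negb. unfold g. rewrite Hs, argv_div. field.
Qed.

Lemma partial m : forall r, (m + S r = l)%nat ->
  Cmul (Cprod_list (map (fun j => inner_prod p l j tau) (seq 0 (S m)))) (Cpow (Tk r) (Asum p m)) =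
  Cpow (Tk (S r)) (Asum p (S m)).
Proof.
  induction m; intros r Hr.
  - simpl. unfold Cprod_list; simpl. rewrite inner_0. replace l with (S r) by lia. field.
  - rewrite (Cprod_last _ 0 (S m)). simpl (0 + S m)%nat.
    pose proof (IHm (S r) ltac:(lia)) as IH.
    pose proof (inner_mid (S m) ltac:(lia) ltac:(lia)) as M. replace (S m - 1)%nat with m in M by lia.
    replace (l - S m - 1)%nat with r in M by lia. replace (l - S m)%nat with (S r) in M by lia.
    pose proof (closed_k m r) as C1'. pose proof (closed_k (S m) (S r)) as C2'.
    rewrite <- C2', <- M, <- IH, <- C1'. field.
Qed.

End Final.

Theorem main_thm (p l : nat) (hp : Znumtheory.prime (Z.of_nat p))
  (hodd : Nat.odd p = true) (hl : (1 <= l)%nat) (tau : Cplx) (htau : 0 < Cim tau) :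
  outer_prod p l tau = Cpow (theta3 tau) (psi_pp p l).
Proof.
  destruct l as [|l']; [lia|].
  assert (T0 : Tk p tau 0 = theta3 tau).
  { unfold Tk, sg. simpl. f_equal. destruct tau; unfold Cscal; simpl; f_equal; ring. }
  pose proof (partial p hp hodd (S l') tau htau l' 0 ltac:(lia)) as P.
  pose proof (closed_k p hp hodd tau htau (S l') 0) as C.
  pose proof (inner_l p (S l') tau) as IL.
  unfold outer_prod. rewrite (Cprod_last _ 0 (S l')). simpl (0 + S l')%nat. rewrite IL.
  rewrite T0 in P, C.
  set (A := theta3 tau) in *. set (B := Tk p tau 1) in *.
  set (X := Cprod_list (map (fun j => inner_prod p (S l') j tau) (seq 0 (S l')))) in *.
  assert (HA : A <> C0) by (apply theta3_neq0; auto).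
  assert (HB : B <> C0) by (apply Tk_neq0; auto).
  apply (Ccancel (Cmul (Cpow A (Asum p l')) (Cpow B (Asum p (S l'))))).
  { apply Cmul_neq0; apply Cpow_neq0; auto. }
  transitivity (Cmul (Cmul X (Cpow A (Asum p l'))) (Cmul (Fj p (S l') (sg p tau 0)) (Cpow B (Asum p (S l'))))). field.
  rewrite P, C.
  transitivity (Cmul (Cpow B (Asum p (S l'))) (Cmul (Cpow A (Asum p l')) (Cpow A (psi_pp p (S l'))))).
  2: field.
  rewrite <- Cpow_add. f_equal. f_equal. unfold psi_pp. simpl Asum. replace (S l' - 1)%nat with l' by lia. simpl. lia.
Qed.


Theorem lemma2p3 (p l : nat) (hp : Znumtheory.prime (Z.of_nat p))
  (hodd : Nat.odd p = true) (hl : (1 <= l)%nat) (tau : Cplx) (htau : 0 < Cim tau) :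
  outer_prod p l tau = Cpow (theta3 tau) (psi_pp p l).
Proof. exact (main_thm p l hp hodd hl tau htau). Qed.
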